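(* Let $\tau>0$ and consider the system \[ \begin{cases} x'(t)=s-dx(t)-kx(t)v(t),\\ y'(t)=k\mathrm{e}^{-\delta\tau}x(t-\tau)v(t-\tau)-\delta y(t)-py(t)z(t),\\ v'(t)=N\delta y(t)-\mu v(t),\\ z'(t)=qy(t)z(t)-bz(t), \end{cases} \] with initial conditions $x(\theta)=\varphi_{1}(\theta)$, $v(\theta)=\varphi_{3}(\theta)$ for $\theta\in[-\tau,0]$, $y(0)=y_{0}\ge 0$, $z(0)=z_{0}\ge0$, where $\varphi_{1},\varphi_3\in C([-\tau,0],\mathbb{R}_{+})$. Let \[ \overline{R}_{0}=\frac{s}{d\frac{\mu}{k\mathrm{e}^{-\delta\tau}N}},\qquad \overline{R}_{1}=\frac{s}{d\frac{\mu}{k\mathrm{e}^{-\delta\tau}N}+\mathrm{e}^{\delta\tau}\delta\frac{b}{q}}, \] let $E_0=(s/d,0,0,0)$, let $\overline{E}_1=\left(\frac{\mu\mathrm{e}^{\delta\tau}}{kN},\ \frac{\mathrm{e}^{-\delta\tau}}{\delta}\big(s-\frac{d\mu\mathrm{e}^{\delta\tau}}{kN}\big),\ \frac{N\mathrm{e}^{-\delta\tau}}{\mu}\big(s-\frac{d\mu\mathrm{e}^{\delta\tau}}{kN}\big),\ 0\right)$ (the equilibrium with positive $x,y,v$ and $z=0$, existing when $\overline R_0>1$), and let $\overline{E}_2=\left(\bar x_2,\ \frac{b}{q},\ \frac{N\delta b}{\mu q},\ \frac{\delta}{p}\big(\frac{k\mathrm{e}^{-\delta\tau}N\bar x_2}{\mu}-1\big)\right)$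 with $\bar x_2=\frac{s}{d+kN\delta b/(\mu q)}$ (the equilibrium with all components positive, existing when $\overline R_1>1$). Then: (i) If $\overline{R}_{0}\leq1$, then $E_{0}$ is globally asymptotically stable. (ii) If $\overline{R}_{1}\leq1<\overline{R}_{0}$, then $\overline{E}_{1}$ is globally asymptotically stable with respect to solutions whose initial data satisfy $y_{0}+\varphi_{1}(-\tau)\varphi_{3}(-\tau)>0$ or $\varphi_{3}(0)>0$. (iii) If $\overline{R}_{1}>1$, then $\overline{E}_{2}$ is globally asymptotically stable with respect to solutions whose initial data satisfy $z_{0}>0$ and either $y_{0}+\varphi_{1}(-\tau)\varphi_{3}(-\tau)>0$ or $\varphi_{3}(0)>0$.
   Context: All parameters $s,d,k,\delta,p,N,\mu,q,b$ are positive constants. Globally asymptotically stable means: the equilibrium is (Lyapunov) stable and every solution with admissible initial data converges to it as $t\to\infty$. *)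

(* Defs.v *)
From Stdlib Require Import Reals.
From Coquelicot Require Import Coquelicot.
Open Scope R_scope.

(* phi restricted to [-tau,0] is continuous (phi ∈ C([-tau,0], R)):
   the clamped function phi (clamp u) is continuous everywhere. *)
Definition cont_on_init (tau : R) (phi : R -> R) : Prop :=
  forall u : R, continuous (fun w => phi (Rmax (- tau) (Rmin 0 w))) u.

Definition admissible (tau : R) (phi1 phi3 : R -> R) (y0 z0 : R) : Prop :=
  cont_on_init tau phi1 /\ cont_on_init tau phi3 /\
  (forall th, - tau <= th <= 0 -> 0 <= phi1 th /\ 0 <= phi3 th) /\
  0 <= y0 /\ 0 <= z0.

Definition is_solution (s d k dl p N mu q b tau : R)
    (phi1 phi3 : R -> R) (y0 z0 : R) (x y v z : R -> R) : Prop :=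
  (forall th, - tau <= th <= 0 -> x th = phi1 th /\ v th = phi3 th) /\
  y 0 = y0 /\ z 0 = z0 /\
  (forall t, 0 <= t ->
     continuous (fun w => x (Rmax 0 w)) t /\ continuous (fun w => y (Rmax 0 w)) t /\
     continuous (fun w => v (Rmax 0 w)) t /\ continuous (fun w => z (Rmax 0 w)) t) /\
  (forall t, 0 < t ->
     is_derive x t (s - d * x t - k * x t * v t) /\
     is_derive y t (k * exp (- (dl * tau)) * x (t - tau) * v (t - tau)
                    - dl * y t - p * y t * z t) /\
     is_derive v t (N * dl * y t - mu * v t) /\
     is_derive z t (q * y t * z t - b * z t)).

Definition GAS_wrt (s d k dl p N mu q b tau : R)
    (P : (R -> R) -> (R -> R) -> R -> R -> Prop) (e1 e2 e3 e4 : R) : Prop :=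
  (forall eps, 0 < eps -> exists eta, 0 < eta /\
     forall phi1 phi3 y0 z0 x y v z,
       admissible tau phi1 phi3 y0 z0 -> P phi1 phi3 y0 z0 ->
       (forall th, - tau <= th <= 0 ->
          Rabs (phi1 th - e1) < eta /\ Rabs (phi3 th - e3) < eta) ->
       Rabs (y0 - e2) < eta -> Rabs (z0 - e4) < eta ->
       is_solution s d k dl p N mu q b tau phi1 phi3 y0 z0 x y v z ->
       forall t, 0 <= t ->
         Rabs (x t - e1) < eps /\ Rabs (y t - e2) < eps /\
         Rabs (v t - e3) < eps /\ Rabs (z t - e4) < eps) /\
  (forall phi1 phi3 y0 z0 x y v z,
     admissible tau phi1 phi3 y0 z0 -> P phi1 phi3 y0 z0 ->
     is_solution s d k dl p N mu q b tau phi1 phi3 y0 z0 x y v z ->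
     is_lim x p_infty e1 /\ is_lim y p_infty e2 /\
     is_lim v p_infty e3 /\ is_lim z p_infty e4).

Definition R0bar (s d k dl N mu tau : R) : R :=
  s / (d * (mu / (k * exp (- (dl * tau)) * N))).

Definition R1bar (s d k dl N mu q b tau : R) : R :=
  s / (d * (mu / (k * exp (- (dl * tau)) * N)) + exp (dl * tau) * dl * (b / q)).

Definition x2bar (s d k dl N mu q b : R) : R :=
  s / (d + k * N * dl * b / (mu * q)).

Definition cond_ii (tau : R) (phi1 phi3 : R -> R) (y0 z0 : R) : Prop :=
  y0 + phi1 (- tau) * phi3 (- tau) > 0 \/ phi3 0 > 0.

Definition cond_iii (tau : R) (phi1 phi3 : R -> R) (y0 z0 : R) : Prop :=
  z0 > 0 /\ (y0 + phi1 (- tau) * phi3 (- tau) > 0 \/ phi3 0 > 0).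

(* Main.v *)
Require Import Defs.
From Stdlib Require Import Reals Lra Psatz Classical.
From Coquelicot Require Import Coquelicot.
Open Scope R_scope.


Lemma mvt_open (f df : R -> R) (a b : R) :
  a < b -> (forall x, a < x < b -> is_derive f x (df x)) ->
  (forall x, a <= x <= b -> continuous f x) ->
  exists c, a < c < b /\ f b - f a = df c * (b - a).
Proof.
  intros Hab Hd Hc.
  assert (pr1 : forall c, a < c < b -> derivable_pt f c).
  { intros c Hc'. exists (df c). apply is_derive_Reals. auto. }
  assert (pr2 : forall c, a < c < b -> derivable_pt id c).
  { intros c _. apply derivable_pt_id. }
  destruct (MVT f id a b pr1 pr2 Hab) as [c [P HP]].
  - intros c Hc'. apply continuity_pt_filterlim. apply Hc. auto.
  - intros c _. apply derivable_continuous_pt. apply derivable_pt_id.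
  - exists c. split; auto.
    assert (E1 : derive_pt f c (pr1 c P) = df c).
    { apply derive_pt_eq_0. apply is_derive_Reals. auto. }
    assert (E2 : derive_pt id c (pr2 c P) = 1).
    { apply derive_pt_eq_0. apply derivable_pt_lim_id. }
    rewrite E1, E2 in HP. unfold id in HP. lra.
Qed.

Lemma mono_le (f df : R -> R) (a b : R) :
  a <= b -> (forall x, a < x < b -> is_derive f x (df x)) ->
  (forall x, a < x < b -> df x <= 0) ->
  (forall x, a <= x <= b -> continuous f x) -> f b <= f a.
Proof.
  intros Hab Hd Hn Hc. destruct (Req_dec a b) as [->|Hne]; [lra|].
  destruct (mvt_open f df a b) as [c [Hc1 Hc2]]; auto; try lra.
  specialize (Hn c Hc1). nra.
Qed.

Lemma clamp_cont_global (f : R -> R) (a : R) :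
  (forall t, a <= t -> continuous (fun w => f (Rmax a w)) t) ->
  forall t, continuous (fun w => f (Rmax a w)) t.
Proof.
  intros H t. destruct (Rle_lt_dec a t) as [h|h]; auto.
  apply continuous_ext_loc with (fun _ => f a).
  - assert (Hp : 0 < a - t) by lra.
    exists (mkposreal _ Hp). intros y Hy. simpl.
    unfold ball in Hy; simpl in Hy; unfold AbsRing_ball, abs, minus, plus, opp in Hy; simpl in Hy.
    rewrite Rmax_left; auto. apply Rabs_lt_between in Hy. lra.
  - apply continuous_const.
Qed.

Lemma derive_cont (f : R -> R) t l : is_derive f t l -> continuous f t.
Proof. intros H. apply (ex_derive_continuous (K:=R_AbsRing) (V:=R_NormedModule)). exists l. auto. Qed.

Lemma clamp_cont_deriv (f : R -> R) a t l : a < t -> is_derive f t l ->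
  continuous (fun w => f (Rmax a w)) t.
Proof.
  intros Ht Hd. apply continuous_ext_loc with f.
  - assert (Hp : 0 < t - a) by lra.
    exists (mkposreal _ Hp). intros y Hy. simpl.
    unfold ball in Hy; simpl in Hy; unfold AbsRing_ball, abs, minus, plus, opp in Hy; simpl in Hy.
    rewrite Rmax_right; auto. apply Rabs_lt_between in Hy. lra.
  - eapply derive_cont; eauto.
Qed.

Lemma is_derive_clamp (f : R -> R) a t l : a < t -> is_derive f t l ->
  is_derive (fun w => f (Rmax a w)) t l.
Proof.
  intros Ht Hd. apply is_derive_ext_loc with f; auto.
  assert (Hp : 0 < t - a) by lra.
  exists (mkposreal _ Hp). intros y Hy. simpl.
  unfold ball in Hy; simpl in Hy; unfold AbsRing_ball, abs, minus, plus, opp in Hy; simpl in Hy.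
  rewrite Rmax_right; auto. apply Rabs_lt_between in Hy. lra.
Qed.

Lemma prim_deriv (G : R -> R) (a t : R) : (forall u, continuous G u) ->
  is_derive (fun w => RInt G a w) t (G t).
Proof.
  intros HG. apply is_derive_RInt with (f := G) (a := a).
  - apply filter_forall. intros b0. apply (RInt_correct (V:=R_CompleteNormedModule)).
    apply (ex_RInt_continuous (V:=R_CompleteNormedModule)). intros; auto.
  - auto.
Qed.


Lemma dmul (f g : R -> R) t a b : is_derive f t a -> is_derive g t b ->
  is_derive (fun x => f x * g x) t (a * g t + f t * b).
Proof. intros Hf Hg. apply (is_derive_mult f g t a b Hf Hg). intros; apply Rmult_comm. Qed.

Lemma dplus (f g : R -> R) t a b : is_derive f t a -> is_derive g t b ->
  is_derive (fun x => f x + g x) t (a + b).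
Proof. intros Hf Hg. apply (is_derive_plus f g t a b Hf Hg). Qed.

Lemma dminus (f g : R -> R) t a b : is_derive f t a -> is_derive g t b ->
  is_derive (fun x => f x - g x) t (a - b).
Proof. intros Hf Hg. apply (is_derive_minus f g t a b Hf Hg). Qed.

Lemma dscal (f : R -> R) c t a : is_derive f t a ->
  is_derive (fun x => c * f x) t (c * a).
Proof. intros Hf. apply (is_derive_scal f t c a Hf). Qed.

Lemma dconst c t : is_derive (fun _ : R => c) t 0.
Proof. apply (is_derive_const (K:=R_AbsRing) (V:=R_NormedModule) c t). Qed.

Lemma dexp (f : R -> R) t a : is_derive f t a ->
  is_derive (fun x => exp (f x)) t (a * exp (f t)).
Proof. intros Hf. apply (is_derive_comp exp f t (exp (f t)) a). apply is_derive_exp. auto. Qed.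

Lemma dln (f : R -> R) t a : 0 < f t -> is_derive f t a ->
  is_derive (fun x => ln (f x)) t (a / f t).
Proof.
  intros Hp Hf.
  assert (H := is_derive_comp ln f t (/ f t) a).
  change (a / f t) with (scal a (/ f t)).
  apply H; auto. apply is_derive_Reals. apply derivable_pt_lim_ln. auto.
Qed.

Lemma dshift (f : R -> R) c t a : is_derive f (t - c) a ->
  is_derive (fun x => f (x - c)) t a.
Proof.
  intros Hf. assert (H := is_derive_comp f (fun x => x - c) t a 1).
  replace a with (scal 1 a). apply H; auto.
  replace 1 with (1 - 0) by ring. apply (dminus (fun x => x) (fun _ => c) t 1 0). apply (is_derive_id (K:=R_AbsRing)). apply dconst.
  apply (scal_one (K:=R_Ring) (V:=R_ModuleSpace)).
Qed.

Lemma cmul (f g : R -> R) t : continuous f t -> continuous g t -> continuous (fun x => f x * g x) t.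
Proof. intros. apply (continuous_mult (U:=R_UniformSpace) (K:=R_AbsRing) f g t); auto. Qed.

Lemma cplus (f g : R -> R) t : continuous f t -> continuous g t -> continuous (fun x => f x + g x) t.
Proof. intros. apply (continuous_plus (U:=R_UniformSpace) (K:=R_AbsRing) (V:=R_NormedModule) f g t); auto. Qed.

Lemma cconst (c t : R) : continuous (fun _ : R => c) t.
Proof. apply (continuous_const (U:=R_UniformSpace) (V:=R_UniformSpace)). Qed.

Lemma cscal (f : R -> R) c t : continuous f t -> continuous (fun x => c * f x) t.
Proof. intros. apply cmul; auto. apply cconst. Qed.

Lemma cminus (f g : R -> R) t : continuous f t -> continuous g t -> continuous (fun x => f x - g x) t.
Proof. intros. unfold Rminus. apply cplus; auto.
  apply (continuous_ext (fun x => (-1) * g x)). 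
  intros x. change (@eq R (-1 * g x) (- g x)). ring. apply cscal; auto. Qed.

Lemma cexp (f : R -> R) t : continuous f t -> continuous (fun x => exp (f x)) t.
Proof. intros H. apply (continuous_comp f exp t H). apply derive_cont with (exp (f t)). apply is_derive_exp. Qed.

Lemma cln (f : R -> R) t : 0 < f t -> continuous f t -> continuous (fun x => ln (f x)) t.
Proof. intros Hp H. apply (continuous_comp f ln t H). apply derive_cont with (/ f t).
  apply is_derive_Reals. apply derivable_pt_lim_ln. auto. Qed.

Lemma cshift (f : R -> R) c t : continuous f (t - c) -> continuous (fun x => f (x - c)) t.
Proof. intros H. apply (continuous_comp (fun x => x - c) f t); auto.
  apply derive_cont with 1. replace 1 with (1 - 0) by ring.
  apply (dminus (fun x => x) (fun _ => c) t 1 0). apply (is_derive_id (K:=R_AbsRing)). apply dconst. Qed.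

Lemma dext (f g : R -> R) (t l : R) : (forall x : R, f x = g x) -> is_derive f t l -> is_derive g t l.
Proof. intros H. apply is_derive_ext. exact H. Qed.

Lemma cext (f g : R -> R) (t : R) : (forall x : R, f x = g x) -> continuous f t -> continuous g t.
Proof. intros H. apply continuous_ext. exact H. Qed.

Lemma deq (f : R -> R) (t a b : R) : is_derive f t a -> a = b -> is_derive f t b.
Proof. intros H ->; auto. Qed.

(* positivity via integrating factor *)
Lemma spos (u g h : R -> R) (a b : R) :
  a < b ->
  (forall t, continuous (fun w => h (Rmax a w)) t) ->
  (forall t, a <= t <= b -> continuous (fun w => u (Rmax a w)) t) ->
  (forall t, a < t < b -> is_derive u t (g t - h t * u t)) ->
  exists K, 0 < K /\
    ((forall t, a < t < b -> 0 <= g t) -> u a <= K * u b) /\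
    ((forall t, a < t < b -> 0 < g t) -> u a < K * u b).
Proof.
  intros Hab Hh Hu Hd.
  set (hc := fun w => h (Rmax a w)).
  set (F := fun w => u (Rmax a w) * exp (RInt hc a w)).
  assert (HF : forall t, a < t < b -> is_derive F t (g t * exp (RInt hc a t))).
  { intros t Ht. unfold F.
    eapply deq. apply (dmul (fun w => u (Rmax a w)) (fun w => exp (RInt hc a w)) t _ _
       (is_derive_clamp u a t _ (proj1 Ht) (Hd t Ht))
       (dexp _ t _ (prim_deriv hc a t Hh))).
    unfold hc. rewrite Rmax_right by lra. ring. }
  assert (HFc : forall t, a <= t <= b -> continuous F t).
  { intros t Ht. unfold F. apply cmul. apply Hu; auto. apply cexp.
    apply derive_cont with (hc t). apply prim_deriv. auto. }
  exists (exp (RInt hc a b)). split. apply exp_pos.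
  assert (Fa : F a = u a). { unfold F. rewrite RInt_point. rewrite Rmax_left by lra.
    change (u a * exp 0 = u a). rewrite exp_0. ring. }
  assert (Fb : F b = u b * exp (RInt hc a b)). { unfold F. rewrite Rmax_right by lra. auto. }
  destruct (mvt_open F (fun t => g t * exp (RInt hc a t)) a b Hab HF HFc) as [c [Hc1 Hc2]].
  rewrite Fa, Fb in Hc2.
  split; intros Hg; specialize (Hg c Hc1); assert (E := exp_pos (RInt hc a c));
  assert (0 < b - a) by lra.
  - assert (0 <= g c * exp (RInt hc a c) * (b - a)). { apply Rmult_le_pos; [apply Rmult_le_pos|]; lra. } lra.
  - assert (0 < g c * exp (RInt hc a c) * (b - a)). { apply Rmult_lt_0_compat; [apply Rmult_lt_0_compat|]; lra. } lra.
Qed.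


Definition Hf (a u : R) := u - a - a * ln (u / a).

Lemma ln_le_sub1 x : 0 < x -> ln x <= x - 1.
Proof. intros. assert (H1 := exp_ineq1_le (ln x)). rewrite exp_ln in H1; lra. Qed.

Lemma Hf_0 u : Hf 0 u = u.
Proof. unfold Hf. ring. Qed.

Lemma Hf_sq a u : 0 < a -> 0 < u -> (sqrt u - sqrt a)^2 <= Hf a u.
Proof.
  intros Ha Hu. set (U := sqrt u). set (A := sqrt a).
  assert (HU : 0 < U) by (apply sqrt_lt_R0; auto).
  assert (HA : 0 < A) by (apply sqrt_lt_R0; auto).
  assert (eu : u = U * U) by (unfold U; rewrite sqrt_sqrt; lra).
  assert (ea : a = A * A) by (unfold A; rewrite sqrt_sqrt; lra).
  assert (E : u / a = (U / A) * (U / A)) by (rewrite eu, ea; field; lra).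
  assert (HUA : 0 < U / A) by (apply Rdiv_lt_0_compat; auto).
  assert (L : ln (u / a) = 2 * ln (U / A)) by (rewrite E, ln_mult; auto; ring).
  assert (L2 := ln_le_sub1 (U / A) HUA).
  unfold Hf. rewrite L.
  assert (a * (2 * ln (U / A)) <= 2 * A * U - 2 * A * A).
  { rewrite ea. assert (A * A * (2 * ln (U / A)) <= A * A * (2 * (U / A - 1))).
    { apply Rmult_le_compat_l; nra. }
    replace (A * A * (2 * (U / A - 1))) with (2 * A * U - 2 * A * A) in H by (field; lra). lra. }
  rewrite eu, ea in *. nra.
Qed.

Lemma Hf_nonneg a u : 0 <= a -> (a = 0 -> 0 <= u) -> (0 < a -> 0 < u) -> 0 <= Hf a u.
Proof.
  intros Ha H0 Hp. destruct (Req_dec a 0) as [->|Hne].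
  - rewrite Hf_0. auto.
  - assert (0 < a) by lra. assert (H2 := Hf_sq a u H (Hp H)).
    assert (0 <= (sqrt u - sqrt a)^2) by apply pow2_ge_0. lra.
Qed.

Lemma Hf_upper a u : 0 <= a -> (a = 0 -> 0 <= u) -> (0 < a -> 0 < u) -> u <= 2 * (Hf a u + a).
Proof.
  intros Ha H0 Hp. destruct (Req_dec a 0) as [->|Hne].
  - rewrite Hf_0. specialize (H0 eq_refl). lra.
  - assert (Ha' : 0 < a) by lra. assert (Hu := Hp Ha').
    set (U := sqrt u). set (A := sqrt a).
    assert (HU : 0 < U) by (apply sqrt_lt_R0; auto).
    assert (HA : 0 < A) by (apply sqrt_lt_R0; auto).
    assert (eu : u = U * U) by (unfold U; rewrite sqrt_sqrt; lra).
    assert (ea : a = A * A) by (unfold A; rewrite sqrt_sqrt; lra).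
    assert (H2 := Hf_sq a u Ha' Hu). fold U A in H2.
    assert (H3 := Rle_0_sqr (U - 2*A)); unfold Rsqr in H3.
    replace ((U - A)^2) with ((U-A)*(U-A)) in H2 by ring.
    rewrite eu at 1. rewrite ea at 2. nra.
Qed.

Lemma Hf_close a u : 0 <= a -> (a = 0 -> 0 <= u) -> (0 < a -> 0 < u) ->
  Rabs (u - a) <= Hf a u + 2 * sqrt a * sqrt (Hf a u).
Proof.
  intros Ha H0 Hp. destruct (Req_dec a 0) as [->|Hne].
  - rewrite Hf_0, sqrt_0. specialize (H0 eq_refl). rewrite Rminus_0_r, Rabs_right; lra.
  - assert (Ha' : 0 < a) by lra. assert (Hu := Hp Ha').
    assert (H2 := Hf_sq a u Ha' Hu).
    set (U := sqrt u) in *. set (A := sqrt a) in *.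
    assert (HU : 0 < U) by (apply sqrt_lt_R0; auto).
    assert (HA : 0 < A) by (apply sqrt_lt_R0; auto).
    assert (eu : u = U * U) by (unfold U; rewrite sqrt_sqrt; lra).
    assert (ea : a = A * A) by (unfold A; rewrite sqrt_sqrt; lra).
    set (D := Hf a u) in *.
    assert (HD : 0 <= D) by (assert (0 <= (U - A)^2) by apply pow2_ge_0; lra).
    set (S := sqrt D).
    assert (HS : 0 <= S) by apply sqrt_pos.
    assert (eD : D = S * S) by (unfold S; rewrite sqrt_sqrt; lra).
    assert (Rabs (U - A) <= S).
    { rewrite <- sqrt_Rsqr_abs. unfold S. apply sqrt_le_1_alt. unfold Rsqr.
      replace ((U - A) * (U - A)) with ((U-A)^2) by ring. lra. }
    rewrite eu, ea. replace (U * U - A * A) with ((U - A) * (U + A)) by ring.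
    rewrite Rabs_mult, (Rabs_right (U + A)) by lra.
    assert (Rabs (U - A) * (U + A) <= S * (U + A)) by (apply Rmult_le_compat_r; lra).
    assert (U <= A + S). { apply Rabs_le_between in H. lra. }
    nra.
Qed.

Lemma Hf_small a u eta : 0 <= a -> 0 < eta -> (a = 0 \/ 2 * eta <= a) -> 0 <= u ->
  Rabs (u - a) < eta -> Hf a u <= eta.
Proof.
  intros Ha He Hc Hu Hd. apply Rabs_lt_between in Hd.
  destruct Hc as [->|Hc].
  - rewrite Hf_0. lra.
  - assert (Ha' : 0 < a) by lra. assert (Hu' : a / 2 < u) by lra.
    assert (Hua : 0 < u) by lra.
    assert (L := ln_le_sub1 (a / u) (Rdiv_lt_0_compat _ _ Ha' Hua)).
    assert (E : ln (u / a) = - ln (a / u)).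
    { replace (u / a) with (/ (a / u)) by (field; lra). rewrite ln_Rinv; auto. apply Rdiv_lt_0_compat; lra. }
    unfold Hf. rewrite E.
    assert (a * ln (a / u) <= a * (a / u - 1)) by (apply Rmult_le_compat_l; lra).
    assert (u - a - a * - ln (a / u) <= (u - a) * (u - a) / u).
    { replace ((u - a) * (u - a) / u) with (u - a + a * (a / u - 1)) by (field; lra). lra. }
    assert ((u - a) * (u - a) / u <= eta * eta / (a / 2)).
    { apply Rmult_le_compat. apply Rle_0_sqr. left; apply Rinv_0_lt_compat; lra.
      clear -Hd He; nra.
      apply Rinv_le_contravar; lra. }
    assert (eta * eta / (a / 2) <= eta).
    { apply Rmult_le_reg_r with (a / 2). lra. unfold Rdiv. rewrite Rmult_assoc, Rinv_l by lra.
      replace (eta * (a */ 2)) with (eta * (a/2)) by reflexivity. rewrite Rmult_1_r. apply Rmult_le_compat_l; lra. }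
    lra.
Qed.

Lemma dHf (a : R) (u : R -> R) (t du : R) : 0 <= a -> (a = 0 \/ 0 < u t) -> is_derive u t du ->
  is_derive (fun x => Hf a (u x)) t ((1 - a / u t) * du).
Proof.
  intros Ha Hc Hd. destruct (Req_dec a 0) as [->|Hne].
  - apply dext with u. intros; rewrite Hf_0; auto. eapply deq; eauto. unfold Rdiv; ring.
  - destruct Hc as [|Hp]; [lra|]. assert (Ha' : 0 < a) by lra.
    assert (Hd' : is_derive (fun x => u x / a) t (du / a)).
    { apply dext with (fun x => / a * u x). intros; unfold Rdiv; ring.
      eapply deq. apply dscal; eauto. unfold Rdiv; ring. }
    unfold Hf. eapply deq.
    apply dminus. apply dminus. exact Hd. apply dconst.
    apply dscal. apply dln. apply Rdiv_lt_0_compat; auto. exact Hd'.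
    simpl. field. lra.
Qed.

Lemma cHf (a : R) (u : R -> R) (t : R) : 0 <= a -> (a = 0 \/ 0 < u t) -> continuous u t ->
  continuous (fun x => Hf a (u x)) t.
Proof.
  intros Ha Hc Hd. destruct (Req_dec a 0) as [->|Hne].
  - apply (cext u). intros; rewrite Hf_0; auto. auto.
  - destruct Hc as [|Hp]; [lra|]. assert (Ha' : 0 < a) by lra.
    unfold Hf. apply cminus. apply cminus. auto. apply cconst.
    apply cscal. apply cln. apply Rdiv_lt_0_compat; auto.
    apply (cext (fun x => / a * u x)). intros; unfold Rdiv; ring. apply cscal; auto.
Qed.


Lemma lim_intro (f : R -> R) (l : R) :
  (forall eps, 0 < eps -> exists M, forall t, M < t -> Rabs (f t - l) < eps) ->
  is_lim f p_infty l.
Proof.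
  intros H. apply is_lim_spec. intros eps. destruct (H eps (cond_pos eps)) as [M HM].
  exists M. auto.
Qed.

Lemma lim_elim (f : R -> R) (l : R) : is_lim f p_infty l ->
  forall eps, 0 < eps -> exists M, forall t, M < t -> Rabs (f t - l) < eps.
Proof.
  intros H eps He. apply is_lim_spec in H. destruct (H (mkposreal eps He)) as [M HM].
  exists M. auto.
Qed.

Lemma lip_of_bound (f df : R -> R) t0 B :
  (forall t, t0 < t -> is_derive f t (df t)) -> (forall t, t0 < t -> Rabs (df t) <= B) ->
  forall t u, t0 < t -> t0 < u -> Rabs (f t - f u) <= B * Rabs (t - u).
Proof.
  intros Hd Hb.
  assert (K : forall t u, t0 < t -> t < u -> Rabs (f t - f u) <= B * Rabs (t - u)).
  { intros t u Ht Htu. destruct (mvt_open f df t u Htu) as [c [Hc1 Hc2]].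
    - intros x Hx. apply Hd. lra.
    - intros x Hx. apply derive_cont with (df x). apply Hd. lra.
    - rewrite <- Rabs_Ropp. replace (- (f t - f u)) with (f u - f t) by ring. rewrite Hc2.
      rewrite Rabs_mult. rewrite (Rabs_minus_sym t u). apply Rmult_le_compat_r. apply Rabs_pos.
      apply Hb. lra. }
  intros t u Ht Hu. destruct (Rtotal_order t u) as [H|[H|H]].
  - auto.
  - subst. unfold Rminus. rewrite !Rplus_opp_r, Rabs_R0. lra.
  - rewrite Rabs_minus_sym, (Rabs_minus_sym t u). auto.
Qed.

Lemma nonincr (V dV : R -> R) t0 : (forall t, t0 < t -> is_derive V t (dV t)) ->
  (forall t, t0 < t -> dV t <= 0) -> forall a b, t0 < a -> a <= b -> V b <= V a.
Proof.
  intros Hd Hn a b Ha Hab. apply (mono_le V dV a b Hab).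
  - intros x Hx. apply Hd. lra.
  - intros x Hx. apply Hn. lra.
  - intros x Hx. apply derive_cont with (dV x). apply Hd. lra.
Qed.

Lemma barbalat (V dV f : R -> R) (t0 c L : R) :
  0 < c -> 0 < L ->
  (forall t, t0 < t -> is_derive V t (dV t)) ->
  (forall t, t0 < t -> dV t <= - c * f t) ->
  (forall t, t0 < t -> 0 <= V t) ->
  (forall t, t0 < t -> 0 <= f t) ->
  (forall t u, t0 < t -> t0 < u -> Rabs (f t - f u) <= L * Rabs (t - u)) ->
  is_lim f p_infty 0.
Proof.
  intros Hc HL Hd Hdv HV Hf Hlip. apply lim_intro. intros eps He.
  apply NNPP. intros Hno.
  assert (Hinf : forall M, exists t, M < t /\ t0 < t /\ eps <= f t).
  { intros M. apply NNPP. intros Hn. apply Hno. exists (Rmax M t0). intros t Ht.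
    destruct (Rle_dec eps (f t)) as [h|h].
    - exfalso. apply Hn. exists t. repeat split; auto.
      apply Rle_lt_trans with (Rmax M t0); auto. apply Rmax_l.
      apply Rle_lt_trans with (Rmax M t0); auto. apply Rmax_r.
    - rewrite Rminus_0_r, Rabs_right. lra. apply Rle_ge, Hf.
      apply Rle_lt_trans with (Rmax M t0); auto. apply Rmax_r. }
  set (h := eps / (2 * L)). assert (Hh : 0 < h) by (unfold h; apply Rdiv_lt_0_compat; lra).
  set (D := c * (eps / 2) * h). assert (HD : 0 < D) by (unfold D; apply Rmult_lt_0_compat; [apply Rmult_lt_0_compat|]; lra).
  assert (Hdec : forall a b, t0 < a -> a <= b -> V b <= V a).
  { apply (nonincr V dV t0 Hd). intros t Ht. specialize (Hdv t Ht). specialize (Hf t Ht).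
    assert (0 <= c * f t) by (apply Rmult_le_pos; lra). lra. }
  assert (Hn : forall n : nat, exists T, t0 + 1 <= T /\ V T <= V (t0 + 1) - INR n * D).
  { induction n as [|n IH].
    - exists (t0 + 1). simpl. split; lra.
    - destruct IH as [T [HT HVT]].
      destruct (Hinf T) as [t [Ht1 [Ht2 Ht3]]].
      exists (t + h). split. lra.
      destruct (mvt_open V dV t (t + h)) as [xi [Hxi1 Hxi2]]. lra.
      + intros x Hx. apply Hd. lra.
      + intros x Hx. apply derive_cont with (dV x). apply Hd. lra.
      + assert (Hfx : eps / 2 <= f xi).
        { assert (Hl := Hlip xi t ltac:(lra) ltac:(lra)).
          rewrite (Rabs_right (xi - t)) in Hl by lra. apply Rabs_le_between in Hl.
          assert (L * (xi - t) <= L * h) by (apply Rmult_le_compat_l; lra).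
          assert (L * h = eps / 2) by (unfold h; field; lra). lra. }
        assert (dV xi <= - c * (eps / 2)).
        { specialize (Hdv xi ltac:(lra)). assert (c * (eps/2) <= c * f xi) by (apply Rmult_le_compat_l; lra). lra. }
        assert (Hstep : V (t + h) <= V t - D).
        { unfold D. replace (t + h - t) with h in Hxi2 by ring.
          assert (dV xi * h <= - c * (eps / 2) * h) by (apply Rmult_le_compat_r; lra). lra. }
        assert (V t <= V T) by (apply Hdec; lra).
        rewrite S_INR. lra. }
  destruct (INR_unbounded (V (t0 + 1) / D)) as [n Hn'].
  destruct (Hn n) as [T [HT HVT]].
  assert (0 <= V T) by (apply HV; lra).
  assert (INR n * D > V (t0 + 1)).
  { apply Rmult_gt_compat_r with (r := D) in Hn'; auto.
    unfold Rdiv in Hn'. rewrite Rmult_assoc, Rinv_l in Hn' by lra. lra. }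
  lra.
Qed.

Lemma deriv_to_zero (g dg : R -> R) (t0 M l : R) :
  0 <= M ->
  (forall t, t0 < t -> is_derive g t (dg t)) ->
  (forall t u, t0 < t -> t0 < u -> Rabs (dg t - dg u) <= M * Rabs (t - u)) ->
  is_lim g p_infty l -> is_lim dg p_infty 0.
Proof.
  intros HM Hd Hlip Hl. apply lim_intro. intros eps He.
  set (h := eps / (2 * (M + 1))). assert (Hh : 0 < h) by (unfold h; apply Rdiv_lt_0_compat; lra).
  destruct (lim_elim g l Hl (eps * h / 4)) as [T HT].
  { apply Rmult_lt_0_compat; [apply Rmult_lt_0_compat|]; lra. }
  exists (Rmax T t0). intros t Ht.
  assert (T < t) by (apply Rle_lt_trans with (Rmax T t0); auto; apply Rmax_l).
  assert (t0 < t) by (apply Rle_lt_trans with (Rmax T t0); auto; apply Rmax_r).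
  destruct (mvt_open g dg t (t + h)) as [xi [Hxi1 Hxi2]]. lra.
  + intros x Hx. apply Hd. lra.
  + intros x Hx. apply derive_cont with (dg x). apply Hd. lra.
  + replace (t + h - t) with h in Hxi2 by ring.
    assert (A1 := HT t ltac:(lra)). assert (A2 := HT (t + h) ltac:(lra)).
    assert (Hxi : Rabs (dg xi) * h < eps * h / 2).
    { assert (E : Rabs (dg xi) * h = Rabs (g (t + h) - g t)).
      { rewrite Hxi2, Rabs_mult, (Rabs_right h); lra. }
      rewrite E.
      replace (g (t + h) - g t) with ((g (t + h) - l) - (g t - l)) by ring.
      eapply Rle_lt_trans. apply Rabs_triang. rewrite Rabs_Ropp. lra. }
    assert (Hxi' : Rabs (dg xi) < eps / 2).
    { apply Rmult_lt_reg_r with h; auto. lra. }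
    assert (Hl2 := Hlip t xi ltac:(lra) ltac:(lra)).
    rewrite (Rabs_left (t - xi)) in Hl2 by lra.
    assert (M * - (t - xi) <= M * h) by (apply Rmult_le_compat_l; lra).
    assert (M * h < eps / 2).
    { unfold h. apply Rmult_lt_reg_r with (2 * (M + 1)). lra.
      replace (M * (eps / (2 * (M + 1))) * (2 * (M + 1))) with (M * eps) by (field; lra). nra. }
    rewrite Rminus_0_r.
    replace (dg t) with ((dg t - dg xi) + dg xi) by ring.
    eapply Rle_lt_trans. apply Rabs_triang. lra.
Qed.


Definition dLexpr (s d k dl p N mu q b E Ei xs ys vs zs x y w z xt wt : R) : R :=
  (1 - xs/x)*(s - d*x - k*x*w)
  + Ei*((1 - ys/y)*(k*E*xt*wt - dl*y - p*y*z))
  + (Ei*(dl + p*zs)/(N*dl))*((1 - vs/w)*(N*dl*y - mu*w))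
  + (Ei*p/q)*((1 - zs/z)*(q*y*z - b*z))
  + k*(Hf (xs*vs) (x*w) - Hf (xs*vs) (xt*wt)).

Lemma zterm zs z y q b : (zs = 0 \/ 0 < z) -> (1 - zs/z)*(q*y*z - b*z) = (z - zs)*(q*y - b).
Proof. intros [->|H]. unfold Rdiv; ring. field. lra. Qed.

Lemma key_ineq (s d k dl p N mu q b E Ei xs ys vs zs x y w z xt wt : R) :
  0 < s -> 0 < d -> 0 < k -> 0 < dl -> 0 < p -> 0 < N -> 0 < mu -> 0 < q -> 0 < b ->
  0 < E -> E * Ei = 1 ->
  0 < xs -> 0 <= ys -> 0 <= vs -> 0 <= zs ->
  s = d*xs + k*xs*vs -> N*dl*ys = mu*vs -> k*E*xs*vs = (dl + p*zs)*ys ->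
  k*xs*(N*dl) <= Ei*(dl + p*zs)*mu -> q*ys <= b -> zs*(q*ys - b) = 0 ->
  0 < x -> 0 <= y -> (0 < ys -> 0 < y) -> 0 <= w -> (0 < vs -> 0 < w) ->
  0 <= z -> (0 < zs -> 0 < z) -> 0 < xt -> 0 <= wt -> (0 < vs -> 0 < wt) ->
  dLexpr s d k dl p N mu q b E Ei xs ys vs zs x y w z xt wt
    <= - d * (x - xs)^2 / x + Ei*p*(ys - b/q)*z.
Proof.
  intros Hs Hd Hk Hdl Hp HN Hmu Hq Hb HE HEi Hxs Hys Hvs Hzs E1 E2 E3 E4 E5 E6
    Hx Hy Hy' Hw Hw' Hz Hz' Hxt Hwt Hwt'.
  unfold dLexpr. rewrite zterm by (destruct (Req_dec zs 0); [left|right]; auto; apply Hz'; lra).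
  assert (HEi' : Ei = / E) by (field_simplify_eq; lra).
  destruct (Req_dec vs 0) as [Hv0|Hvp].
  -
    subst vs. assert (ys = 0). { assert (N * dl * ys = 0) by lra.
      apply Rmult_integral in H as [H|H]; [|auto]. apply Rmult_integral in H as [H|H]; lra. }
    subst ys. assert (zs = 0). { assert (zs * b = 0) by lra.
      apply Rmult_integral in H as [H|H]; lra. }
    subst zs. rewrite (Rmult_0_r xs), !Hf_0. rewrite E1.
    assert (Heq : (1 - xs / x) * (d * xs + k * xs * 0 - d * x - k * x * w) +
      Ei * ((1 - 0 / y) * (k * E * xt * wt - dl * y - p * y * z)) +
      Ei * (dl + p * 0) / (N * dl) * ((1 - 0 / w) * (N * dl * y - mu * w)) +
      Ei * p / q * ((z - 0) * (q * y - b)) + k * (x * w - xt * wt)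
      = - d * (x - xs)^2 / x + (k * xs - Ei * mu / N) * w + Ei * p * (0 - b / q) * z).
    { unfold Rdiv. rewrite !Rmult_0_l. rewrite HEi'. field. lra. }
    rewrite Heq.
    assert (k * xs - Ei * mu / N <= 0).
    { assert (k * xs * (N * dl) <= (Ei * mu / N) * (N * dl)).
      { replace (Ei * mu / N * (N * dl)) with (Ei * (dl + p * 0) * mu) by (field; lra). auto. }
      apply Rmult_le_reg_r in H; nra. }
    assert ((k * xs - Ei * mu / N) * w <= 0) by (apply Rmult_le_0_r; lra).
    lra.
  - assert (Hv : 0 < vs) by lra.
    assert (Hys' : 0 < ys). { assert (0 < mu * vs) by (apply Rmult_lt_0_compat; lra).
      assert (0 < N * dl) by (apply Rmult_lt_0_compat; lra).
      destruct (Req_dec ys 0) as [->|]; [|lra]. lra. }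
    specialize (Hy' Hys'). specialize (Hw' Hv). specialize (Hwt' Hv).
    set (ws := xs * vs). assert (Hws : 0 < ws) by (unfold ws; apply Rmult_lt_0_compat; lra).
    set (r1 := xs / x). set (r2 := xt * wt * ys / (ws * y)). set (r3 := y * vs / (ys * w)).
    assert (Hr1 : 0 < r1) by (unfold r1; apply Rdiv_lt_0_compat; lra).
    assert (Hr2 : 0 < r2).
    { unfold r2. apply Rdiv_lt_0_compat; apply Rmult_lt_0_compat; try apply Rmult_lt_0_compat; lra. }
    assert (Hr3 : 0 < r3).
    { unfold r3. apply Rdiv_lt_0_compat; apply Rmult_lt_0_compat; lra. }
    set (La := ln (x * w / ws)). set (Lb := ln (xt * wt / ws)).
    assert (Hsum : ln r1 + ln r2 + ln r3 = Lb - La).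
    { rewrite <- !ln_mult by (first [lra | apply Rmult_lt_0_compat; lra]).
      assert (HPa : 0 < x * w / ws) by (apply Rdiv_lt_0_compat; try apply Rmult_lt_0_compat; lra).
      assert (HPb : 0 < xt * wt / ws) by (apply Rdiv_lt_0_compat; try apply Rmult_lt_0_compat; lra).
      unfold La, Lb. unfold Rminus. rewrite <- (ln_Rinv _ HPa). rewrite <- ln_mult by (try apply Rinv_0_lt_compat; lra).
      f_equal. unfold r1, r2, r3, ws. field. repeat split; lra. }
    assert (Ek : k = (dl + p*zs)*ys/(E*xs*vs)).
    { rewrite <- E3. field. repeat split; lra. }
    assert (Emu : mu = N*dl*ys/vs). { rewrite E2. field. lra. }
    assert (Heq : (1 - xs / x) * (s - d * x - k * x * w) +
      Ei * ((1 - ys / y) * (k * E * xt * wt - dl * y - p * y * z)) +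
      Ei * (dl + p * zs) / (N * dl) * ((1 - vs / w) * (N * dl * y - mu * w)) +
      Ei * p / q * ((z - zs) * (q * y - b)) +
      k * (Hf ws (x * w) - Hf ws (xt * wt))
      = - d * (x - xs) ^ 2 / x + (k * xs - Ei * (dl + p * zs) / (N * dl) * mu) * w
        + Ei * p * (ys - b / q) * z + Ei * p * zs * (b / q - ys)
        - k * ws * ((r1 - 1) + (r2 - 1) + (r3 - 1)) + k * ws * (Lb - La)).
    { unfold Hf. fold ws. fold La Lb. unfold r1, r2, r3. rewrite E1. unfold ws.
      rewrite Ek, Emu, HEi'. field. repeat split; lra. }
    eapply Rle_trans. right. exact Heq. rewrite <- Hsum.
    assert (h1 := ln_le_sub1 r1 Hr1). assert (h2 := ln_le_sub1 r2 Hr2). assert (h3 := ln_le_sub1 r3 Hr3).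
    assert (0 <= k * ws) by (apply Rmult_le_pos; lra).
    assert (k * ws * (ln r1 + ln r2 + ln r3) <= k * ws * ((r1 - 1) + (r2 - 1) + (r3 - 1)))
      by (apply Rmult_le_compat_l; lra).
    assert (Ez : Ei * p * zs * (b / q - ys) = 0).
    { replace (Ei * p * zs * (b / q - ys)) with (- (Ei * p / q) * (zs * (q * ys - b))) by (field; lra).
      rewrite E6. ring. }
    assert (k * xs - Ei * (dl + p * zs) / (N * dl) * mu <= 0).
    { assert (k * xs * (N * dl) <= (Ei * (dl + p * zs) / (N * dl) * mu) * (N * dl)).
      { replace (Ei * (dl + p * zs) / (N * dl) * mu * (N * dl)) with (Ei * (dl + p * zs) * mu) by (field; lra). auto. }
      apply Rmult_le_reg_r in H1. lra. apply Rmult_lt_0_compat; lra. }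
    assert ((k * xs - Ei * (dl + p * zs) / (N * dl) * mu) * w <= 0) by (apply Rmult_le_0_r; lra).
    lra.
Qed.


Definition Gf (xs vs : R) (X W : R -> R) (u : R) := Hf (xs * vs) (X u * W u).

Definition Lyap (k dl p N q tau E Ei xs ys vs zs : R) (X Y W Z : R -> R) (t : R) : R :=
  Hf xs (X t) + Ei * Hf ys (Y t) + (Ei*(dl + p*zs)/(N*dl)) * Hf vs (W t)
  + (Ei*p/q) * Hf zs (Z t)
  + k * (RInt (Gf xs vs X W) 0 t - RInt (Gf xs vs X W) 0 (t - tau)).

Record posH (xs ys vs zs : R) (X Y W Z : R -> R) : Prop := {
  pX : forall u, 0 < X u;
  pY : forall u, 0 <= Y u;
  pY' : 0 < ys -> forall u, 0 < Y u;
  pW : forall u, 0 <= W u;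
  pW' : 0 < vs -> forall u, 0 < W u;
  pZ : forall u, 0 <= Z u;
  pZ' : 0 < zs -> forall u, 0 < Z u;
  cX : forall u, continuous X u;
  cY : forall u, continuous Y u;
  cW : forall u, continuous W u;
  cZ : forall u, continuous Z u }.

Lemma or_pos (a v : R) : 0 <= a -> (0 < a -> 0 < v) -> (a = 0 \/ 0 < v).
Proof. intros H1 H2. destruct (Req_dec a 0); [left|right]; auto. apply H2. lra. Qed.

Lemma G_cont xs ys vs zs X Y W Z : 0 < xs -> 0 <= vs -> posH xs ys vs zs X Y W Z ->
  forall u, continuous (Gf xs vs X W) u.
Proof.
  intros Hxs Hvs P u. unfold Gf. apply (cHf (xs*vs) (fun u => X u * W u)).
  apply Rmult_le_pos; lra.
  destruct (Req_dec vs 0) as [->|Hne]. left; ring. right.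
  apply Rmult_lt_0_compat. apply (pX _ _ _ _ _ _ _ _ P). apply (pW' _ _ _ _ _ _ _ _ P). lra.
  apply cmul. apply (cX _ _ _ _ _ _ _ _ P). apply (cW _ _ _ _ _ _ _ _ P).
Qed.

Lemma Lyap_cont k dl p N q tau E Ei xs ys vs zs X Y W Z :
  0 < xs -> 0 <= ys -> 0 <= vs -> 0 <= zs -> posH xs ys vs zs X Y W Z ->
  forall t, continuous (Lyap k dl p N q tau E Ei xs ys vs zs X Y W Z) t.
Proof.
  intros Hxs Hys Hvs Hzs P t. destruct P as [PX PY PY' PW PW' PZ PZ' CX CY CW CZ].
  assert (P : posH xs ys vs zs X Y W Z) by (constructor; auto).
  unfold Lyap. apply cplus. apply cplus. apply cplus. apply cplus.
  - apply cHf; auto. lra.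
  - apply cscal. apply cHf; auto. apply or_pos; auto.
  - apply cscal. apply cHf; auto. apply or_pos; auto.
  - apply cscal. apply cHf; auto. apply or_pos; auto.
  - apply cscal. apply cminus.
    + apply derive_cont with (Gf xs vs X W t). apply prim_deriv. apply (G_cont xs ys vs zs X Y W Z); auto.
    + apply derive_cont with (Gf xs vs X W (t - tau)). apply dshift. apply prim_deriv.
      apply (G_cont xs ys vs zs X Y W Z); auto.
Qed.

Lemma Lyap_deriv s d k dl p N mu q b tau E Ei xs ys vs zs X Y W Z (t : R) :
  0 < xs -> 0 <= ys -> 0 <= vs -> 0 <= zs -> posH xs ys vs zs X Y W Z ->
  is_derive X t (s - d * X t - k * X t * W t) ->
  is_derive Y t (k * E * X (t - tau) * W (t - tau) - dl * Y t - p * Y t * Z t) ->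
  is_derive W t (N * dl * Y t - mu * W t) ->
  is_derive Z t (q * Y t * Z t - b * Z t) ->
  is_derive (Lyap k dl p N q tau E Ei xs ys vs zs X Y W Z) t
    (dLexpr s d k dl p N mu q b E Ei xs ys vs zs (X t) (Y t) (W t) (Z t) (X (t - tau)) (W (t - tau))).
Proof.
  intros Hxs Hys Hvs Hzs P DX DY DW DZ.
  assert (HG := G_cont xs ys vs zs X Y W Z Hxs Hvs P).
  destruct P as [PX PY PY' PW PW' PZ PZ' CX CY CW CZ].
  unfold Lyap, dLexpr. apply dplus. apply dplus. apply dplus. apply dplus.
  - apply dHf; auto. lra.
  - apply dscal. apply dHf; auto. apply or_pos; auto.
  - apply dscal. apply dHf; auto. apply or_pos; auto.
  - apply dscal. apply dHf; auto. apply or_pos; auto.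
  - eapply deq. apply dscal. apply dminus.
    + apply (prim_deriv (Gf xs vs X W) 0 t). auto.
    + apply dshift. apply prim_deriv. auto.
    + unfold Gf. reflexivity.
Qed.

Lemma Lyap_nonneg k dl p N q tau E Ei xs ys vs zs X Y W Z t :
  0 < k -> 0 < dl -> 0 < p -> 0 < N -> 0 < q -> 0 < tau -> 0 < Ei ->
  0 < xs -> 0 <= ys -> 0 <= vs -> 0 <= zs -> posH xs ys vs zs X Y W Z ->
  0 <= Hf xs (X t) /\ 0 <= Hf ys (Y t) /\ 0 <= Hf vs (W t) /\ 0 <= Hf zs (Z t) /\
  0 <= RInt (Gf xs vs X W) 0 t - RInt (Gf xs vs X W) 0 (t - tau) /\
  0 <= Lyap k dl p N q tau E Ei xs ys vs zs X Y W Z t.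
Proof.
  intros Hk Hdl Hp HN Hq Htau HEi Hxs Hys Hvs Hzs P.
  assert (HG := G_cont xs ys vs zs X Y W Z Hxs Hvs P).
  destruct P as [PX PY PY' PW PW' PZ PZ' CX CY CW CZ].
  assert (A1 : 0 <= Hf xs (X t)) by (apply Hf_nonneg; auto; lra).
  assert (A2 : 0 <= Hf ys (Y t)) by (apply Hf_nonneg; auto; intros; apply PY'; auto).
  assert (A3 : 0 <= Hf vs (W t)) by (apply Hf_nonneg; auto; intros; apply PW'; auto).
  assert (A4 : 0 <= Hf zs (Z t)) by (apply Hf_nonneg; auto; intros; apply PZ'; auto).
  assert (A5 : 0 <= RInt (Gf xs vs X W) 0 t - RInt (Gf xs vs X W) 0 (t - tau)).
  { assert (Ex : forall a b, ex_RInt (Gf xs vs X W) a b).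
    { intros; apply (ex_RInt_continuous (V:=R_CompleteNormedModule)); auto. }
    assert (C := RInt_Chasles (V:=R_CompleteNormedModule) (Gf xs vs X W) 0 (t - tau) t (Ex _ _) (Ex _ _)).
    change (RInt (Gf xs vs X W) 0 (t - tau) + RInt (Gf xs vs X W) (t - tau) t = RInt (Gf xs vs X W) 0 t) in C.
    assert (0 <= RInt (Gf xs vs X W) (t - tau) t).
    { apply RInt_ge_0. lra. auto. intros u _. unfold Gf. apply Hf_nonneg.
      apply Rmult_le_pos; lra.
      intros. apply Rmult_le_pos; [left; auto| auto].
      intros. apply Rmult_lt_0_compat; auto. apply PW'.
      destruct (Req_dec vs 0) as [->|]; [|lra]. rewrite Rmult_0_r in H; lra. }
    lra. }
  repeat split; auto.
  unfold Lyap.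
  assert (0 <= Ei * (dl + p * zs) / (N * dl)).
  { apply Rmult_le_pos. apply Rmult_le_pos; [lra|]. assert (0 <= p * zs) by (apply Rmult_le_pos; lra). lra.
    left; apply Rinv_0_lt_compat; apply Rmult_lt_0_compat; lra. }
  assert (0 <= Ei * p / q). { apply Rmult_le_pos. apply Rmult_le_pos; lra. left; apply Rinv_0_lt_compat; lra. }
  assert (0 <= Ei * Hf ys (Y t)) by (apply Rmult_le_pos; lra).
  assert (0 <= Ei * (dl + p * zs) / (N * dl) * Hf vs (W t)) by (apply Rmult_le_pos; lra).
  assert (0 <= Ei * p / q * Hf zs (Z t)) by (apply Rmult_le_pos; lra).
  assert (0 <= k * (RInt (Gf xs vs X W) 0 t - RInt (Gf xs vs X W) 0 (t - tau))) by (apply Rmult_le_pos; lra).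
  lra.
Qed.


Lemma lconst (a : R) : is_lim (fun _ => a) p_infty a.
Proof. apply is_lim_const. Qed.

Lemma lplus (f g : R -> R) (a b : R) : is_lim f p_infty a -> is_lim g p_infty b ->
  is_lim (fun y => f y + g y) p_infty (a + b).
Proof. intros. apply (is_lim_plus' f g p_infty a b). all:auto. Qed.

Lemma lminus (f g : R -> R) (a b : R) : is_lim f p_infty a -> is_lim g p_infty b ->
  is_lim (fun y => f y - g y) p_infty (a - b).
Proof. intros. apply (is_lim_minus' f g p_infty a b); auto. Qed.

Lemma lmul (f g : R -> R) (a b : R) : is_lim f p_infty a -> is_lim g p_infty b ->
  is_lim (fun y => f y * g y) p_infty (a * b).
Proof. intros. apply (is_lim_mult f g p_infty a b); auto. simpl; auto. Qed.

Lemma ldiv (f g : R -> R) (a b : R) : is_lim f p_infty a -> is_lim g p_infty b -> b <> 0 ->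
  is_lim (fun y => f y / g y) p_infty (a / b).
Proof. intros. apply (is_lim_div f g p_infty a b); auto.
  intros H'; injection H'; auto. simpl; auto. Qed.

Lemma lext (f g : R -> R) (l : R) : (exists M, forall t, M < t -> f t = g t) ->
  is_lim f p_infty l -> is_lim g p_infty l.
Proof.
  intros [M HM] Hf. apply lim_intro. intros eps He. destruct (lim_elim f l Hf eps He) as [M' HM'].
  exists (Rmax M M'). intros t Ht. rewrite <- HM. apply HM'.
  apply Rle_lt_trans with (Rmax M M'); auto; apply Rmax_r.
  apply Rle_lt_trans with (Rmax M M'); auto; apply Rmax_l.
Qed.

Lemma lshift (f : R -> R) (c l : R) : is_lim f p_infty l -> is_lim (fun t => f (t - c)) p_infty l.
Proof.
  intros Hf. apply lim_intro. intros eps He. destruct (lim_elim f l Hf eps He) as [M HM].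
  exists (M + c). intros t Ht. apply HM. lra.
Qed.

Lemma lsq (f : R -> R) (a : R) : is_lim (fun t => (f t - a)^2) p_infty 0 -> is_lim f p_infty a.
Proof.
  intros H. apply lim_intro. intros eps He. destruct (lim_elim _ 0 H (eps * eps)) as [M HM].
  apply Rmult_lt_0_compat; lra.
  exists M. intros t Ht. specialize (HM t Ht). rewrite Rminus_0_r in HM.
  rewrite Rabs_right in HM by (apply Rle_ge; apply pow2_ge_0).
  destruct (Rlt_dec (Rabs (f t - a)) eps) as [h|h]; auto. exfalso.
  assert (Hb : eps <= Rabs (f t - a)) by lra.
  assert (eps * eps <= Rabs (f t - a) * Rabs (f t - a)) by (apply Rmult_le_compat; lra).
  rewrite <- Rabs_mult in H0. rewrite Rabs_right in H0 by (apply Rle_ge; apply Rle_0_sqr).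
  simpl in HM. lra.
Qed.


Definition params_ok (s d k dl p N mu q b tau E Ei : R) : Prop :=
  0 < s /\ 0 < d /\ 0 < k /\ 0 < dl /\ 0 < p /\ 0 < N /\ 0 < mu /\ 0 < q /\ 0 < b /\
  0 < tau /\ 0 < E /\ E * Ei = 1.

Definition eq_ok (s d k dl p N mu q b E Ei xs ys vs zs : R) : Prop :=
  0 < xs /\ 0 <= ys /\ 0 <= vs /\ 0 <= zs /\
  s = d*xs + k*xs*vs /\ N*dl*ys = mu*vs /\ k*E*xs*vs = (dl + p*zs)*ys /\
  k*xs*(N*dl) <= Ei*(dl + p*zs)*mu /\ q*ys <= b /\ zs*(q*ys - b) = 0.

Definition dde_ok (s d k dl p N mu q b tau E : R) (X Y W Z : R -> R) (t0 : R) : Prop :=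
  forall t, t0 < t ->
    is_derive X t (s - d * X t - k * X t * W t) /\
    is_derive Y t (k * E * X (t - tau) * W (t - tau) - dl * Y t - p * Y t * Z t) /\
    is_derive W t (N * dl * Y t - mu * W t) /\
    is_derive Z t (q * Y t * Z t - b * Z t).

Lemma Ei_pos E Ei : 0 < E -> E * Ei = 1 -> 0 < Ei.
Proof. intros. destruct (Rle_dec Ei 0); [|lra]. assert (E * Ei <= 0) by (apply Rmult_le_0_l; lra). lra. Qed.

Lemma core_dec s d k dl p N mu q b tau E Ei xs ys vs zs X Y W Z t0 :
  params_ok s d k dl p N mu q b tau E Ei -> eq_ok s d k dl p N mu q b E Ei xs ys vs zs ->
  posH xs ys vs zs X Y W Z -> dde_ok s d k dl p N mu q b tau E X Y W Z t0 ->
  (forall t, t0 < t ->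
    dLexpr s d k dl p N mu q b E Ei xs ys vs zs (X t) (Y t) (W t) (Z t) (X (t - tau)) (W (t - tau))
      <= - d * (X t - xs)^2 / X t + Ei*p*(ys - b/q)*Z t) /\
  (forall t, t0 < t -> - d * (X t - xs)^2 / X t <= 0 /\ Ei*p*(ys - b/q)*Z t <= 0) /\
  (forall t, t0 <= t -> Lyap k dl p N q tau E Ei xs ys vs zs X Y W Z t
                     <= Lyap k dl p N q tau E Ei xs ys vs zs X Y W Z t0).
Proof.
  intros HP HE HPos HD.
  destruct HP as (Hs & Hd & Hk & Hdl & Hp & HN & Hmu & Hq & Hb & Htau & HE0 & HEi).
  assert (HEi0 := Ei_pos E Ei HE0 HEi).
  destruct HE as (Hxs & Hys & Hvs & Hzs & E1 & E2 & E3 & E4 & E5 & E6).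
  assert (P := HPos). destruct P as [PX PY PY' PW PW' PZ PZ' CX CY CW CZ].
  assert (K1 : forall t, t0 < t ->
    dLexpr s d k dl p N mu q b E Ei xs ys vs zs (X t) (Y t) (W t) (Z t) (X (t - tau)) (W (t - tau))
      <= - d * (X t - xs)^2 / X t + Ei*p*(ys - b/q)*Z t).
  { intros t Ht. apply key_ineq; auto. }
  assert (K2 : forall t, t0 < t -> - d * (X t - xs)^2 / X t <= 0 /\ Ei*p*(ys - b/q)*Z t <= 0).
  { intros t Ht. split.
    - assert (0 <= d * (X t - xs)^2 / X t).
      { apply Rmult_le_pos. apply Rmult_le_pos. lra. apply pow2_ge_0. left; apply Rinv_0_lt_compat; auto. }
      lra.
    - assert (ys - b / q <= 0). { assert (ys <= b / q). { apply Rmult_le_reg_l with q; auto.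
        replace (q * (b / q)) with b by (field; lra). lra. } lra. }
      assert (0 <= Ei * p) by (apply Rmult_le_pos; lra).
      assert (Ei * p * (ys - b / q) <= 0) by (apply Rmult_le_0_l; lra).
      apply Rmult_le_0_r; auto. }
  split; auto. split; auto.
  intros t Ht. apply (mono_le _ (fun t => dLexpr s d k dl p N mu q b E Ei xs ys vs zs (X t) (Y t) (W t) (Z t) (X (t - tau)) (W (t - tau))) t0 t Ht).
  - intros x Hx. destruct (HD x ltac:(lra)) as (D1 & D2 & D3 & D4).
    apply Lyap_deriv; auto.
  - intros x Hx. specialize (K1 x ltac:(lra)). specialize (K2 x ltac:(lra)). lra.
  - intros x Hx. apply Lyap_cont; auto.
Qed.

Lemma core_bounds s d k dl p N mu q b tau E Ei xs ys vs zs X Y W Z t0 :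
  params_ok s d k dl p N mu q b tau E Ei -> eq_ok s d k dl p N mu q b E Ei xs ys vs zs ->
  posH xs ys vs zs X Y W Z -> dde_ok s d k dl p N mu q b tau E X Y W Z t0 ->
  let C := Lyap k dl p N q tau E Ei xs ys vs zs X Y W Z t0 in
  forall t, t0 <= t ->
    Hf xs (X t) <= C /\ Ei * Hf ys (Y t) <= C /\
    (Ei*(dl + p*zs)/(N*dl)) * Hf vs (W t) <= C /\ (Ei*p/q) * Hf zs (Z t) <= C /\
    X t <= 2 * (C + xs) /\ Y t <= 2 * (C / Ei + ys) /\
    W t <= 2 * (C / (Ei*(dl + p*zs)/(N*dl)) + vs) /\ Z t <= 2 * (C / (Ei*p/q) + zs).
Proof.
  intros HP HE HPos HD C t Ht.
  destruct (core_dec s d k dl p N mu q b tau E Ei xs ys vs zs X Y W Z t0 HP HE HPos HD) as (_ & _ & Hdec).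
  specialize (Hdec t Ht). fold C in Hdec.
  assert (HP' := HP). destruct HP' as (Hs & Hd & Hk & Hdl & Hp & HN & Hmu & Hq & Hb & Htau & HE0 & HEi).
  assert (HEi0 := Ei_pos E Ei HE0 HEi).
  assert (HE' := HE). destruct HE' as (Hxs & Hys & Hvs & Hzs & E1 & E2 & E3 & E4 & E5 & E6).
  destruct (Lyap_nonneg k dl p N q tau E Ei xs ys vs zs X Y W Z t Hk Hdl Hp HN Hq Htau HEi0 Hxs Hys Hvs Hzs HPos)
    as (A1 & A2 & A3 & A4 & A5 & A6).
  assert (Hcv : 0 < Ei * (dl + p * zs) / (N * dl)).
  { apply Rdiv_lt_0_compat. apply Rmult_lt_0_compat; auto. assert (0 <= p * zs) by (apply Rmult_le_pos; lra). lra.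
    apply Rmult_lt_0_compat; lra. }
  assert (Hcz : 0 < Ei * p / q) by (apply Rdiv_lt_0_compat; [apply Rmult_lt_0_compat|]; lra).
  assert (Hdef : Lyap k dl p N q tau E Ei xs ys vs zs X Y W Z t =
    Hf xs (X t) + Ei * Hf ys (Y t) + (Ei*(dl + p*zs)/(N*dl)) * Hf vs (W t)
  + (Ei*p/q) * Hf zs (Z t)
  + k * (RInt (Gf xs vs X W) 0 t - RInt (Gf xs vs X W) 0 (t - tau))) by reflexivity.
  assert (B1 : 0 <= Ei * Hf ys (Y t)) by (apply Rmult_le_pos; lra).
  assert (B2 : 0 <= (Ei*(dl + p*zs)/(N*dl)) * Hf vs (W t)) by (apply Rmult_le_pos; lra).
  assert (B3 : 0 <= (Ei*p/q) * Hf zs (Z t)) by (apply Rmult_le_pos; lra).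
  assert (B4 : 0 <= k * (RInt (Gf xs vs X W) 0 t - RInt (Gf xs vs X W) 0 (t - tau))) by (apply Rmult_le_pos; lra).
  destruct HPos as [PX PY PY' PW PW' PZ PZ' CX CY CW CZ].
  assert (U1 : Hf xs (X t) <= C) by lra.
  assert (U2 : Ei * Hf ys (Y t) <= C) by lra.
  assert (U3 : (Ei*(dl + p*zs)/(N*dl)) * Hf vs (W t) <= C) by lra.
  assert (U4 : (Ei*p/q) * Hf zs (Z t) <= C) by lra.
  assert (dv : forall c h, 0 < c -> c * h <= C -> h <= C / c).
  { intros c h Hc Hh. apply Rmult_le_reg_l with c; auto. replace (c * (C / c)) with C by (field; lra). auto. }
  repeat split; auto.
  - assert (H1 := Hf_upper xs (X t) ltac:(lra) ltac:(intros; apply Rlt_le; auto) ltac:(intros; auto)). lra.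
  - assert (H1 := Hf_upper ys (Y t) Hys ltac:(intros; auto) (fun h => PY' h t)). specialize (dv _ _ HEi0 U2). lra.
  - assert (H1 := Hf_upper vs (W t) Hvs ltac:(intros; auto) (fun h => PW' h t)). specialize (dv _ _ Hcv U3). lra.
  - assert (H1 := Hf_upper zs (Z t) Hzs ltac:(intros; auto) (fun h => PZ' h t)). specialize (dv _ _ Hcz U4). lra.
Qed.


Lemma bnd_mul a b A B : Rabs a <= A -> Rabs b <= B -> Rabs (a * b) <= A * B.
Proof. intros. rewrite Rabs_mult. apply Rmult_le_compat; auto; apply Rabs_pos. Qed.
Lemma bnd_add a b A B : Rabs a <= A -> Rabs b <= B -> Rabs (a + b) <= A + B.
Proof. intros. eapply Rle_trans. apply Rabs_triang. lra. Qed.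
Lemma bnd_sub a b A B : Rabs a <= A -> Rabs b <= B -> Rabs (a - b) <= A + B.
Proof. intros. eapply Rle_trans. apply Rabs_triang. rewrite Rabs_Ropp. lra. Qed.
Lemma bnd_c c : Rabs c <= Rabs c.
Proof. lra. Qed.
Lemma bnd_of a A : 0 <= a -> a <= A -> Rabs a <= A.
Proof. intros. rewrite Rabs_right; lra. Qed.

Lemma dsq (u : R -> R) (c t a : R) : is_derive u t a ->
  is_derive (fun x => (u x - c)^2) t (2 * (u t - c) * a).
Proof.
  intros H. apply dext with (fun x => (u x - c) * (u x - c)). intros; ring.
  eapply deq. apply dmul; apply dminus; eauto; apply dconst. cbv beta. ring.
Qed.

Lemma lip_weaken (f : R -> R) t0 B : (forall t u, t0 < t -> t0 < u -> Rabs (f t - f u) <= B * Rabs (t - u)) ->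
  forall t u, t0 < t -> t0 < u -> Rabs (f t - f u) <= (Rabs B + 1) * Rabs (t - u).
Proof. intros H t u Ht Hu. eapply Rle_trans. apply H; auto. apply Rmult_le_compat_r. apply Rabs_pos.
  assert (B <= Rabs B) by apply RRle_abs. lra. Qed.

Ltac bnd H := repeat first [ apply bnd_sub | apply bnd_add | apply bnd_mul | apply bnd_c | (apply H; lra) ].

Lemma core_attract s d k dl p N mu q b tau E Ei xs ys vs zs X Y W Z t0 :
  params_ok s d k dl p N mu q b tau E Ei -> eq_ok s d k dl p N mu q b E Ei xs ys vs zs ->
  posH xs ys vs zs X Y W Z -> dde_ok s d k dl p N mu q b tau E X Y W Z t0 ->
  is_lim X p_infty xs /\ is_lim Y p_infty ys /\ is_lim W p_infty vs /\ is_lim Z p_infty zs.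
Proof.
  intros HP HE HPos HD.
  assert (HB := core_bounds s d k dl p N mu q b tau E Ei xs ys vs zs X Y W Z t0 HP HE HPos HD).
  destruct (core_dec s d k dl p N mu q b tau E Ei xs ys vs zs X Y W Z t0 HP HE HPos HD) as (K1 & K2 & _).
  set (C := Lyap k dl p N q tau E Ei xs ys vs zs X Y W Z t0) in *.
  assert (HP' := HP). destruct HP' as (Hs & Hd & Hk & Hdl & Hp & HN & Hmu & Hq & Hb & Htau & HE0 & HEi).
  assert (HEi0 := Ei_pos E Ei HE0 HEi).
  assert (HE' := HE). destruct HE' as (Hxs & Hys & Hvs & Hzs & E1 & E2 & E3 & E4 & E5 & E6).
  assert (P := HPos). destruct P as [PX PY PY' PW PW' PZ PZ' CX CY CW CZ].
  set (BX := 2 * (C + xs)). set (BY := 2 * (C / Ei + ys)).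
  set (BW := 2 * (C / (Ei*(dl + p*zs)/(N*dl)) + vs)). set (BZ := 2 * (C / (Ei*p/q) + zs)).
  assert (aX : forall t, t0 <= t -> Rabs (X t) <= BX).
  { intros t Ht. apply bnd_of. left; auto. apply (HB t Ht). }
  assert (aY : forall t, t0 <= t -> Rabs (Y t) <= BY).
  { intros t Ht. apply bnd_of. auto. apply (HB t Ht). }
  assert (aW : forall t, t0 <= t -> Rabs (W t) <= BW).
  { intros t Ht. apply bnd_of. auto. apply (HB t Ht). }
  assert (aZ : forall t, t0 <= t -> Rabs (Z t) <= BZ).
  { intros t Ht. apply bnd_of. auto. apply (HB t Ht). }
  assert (HBX : 0 < BX). { assert (H1 := aX t0 (Rle_refl _)). assert (H2 := PX t0). 
    rewrite Rabs_right in H1; lra. }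
  set (FX := fun t => s - d * X t - k * X t * W t).
  set (FY := fun t => k * E * X (t - tau) * W (t - tau) - dl * Y t - p * Y t * Z t).
  set (FW := fun t => N * dl * Y t - mu * W t).
  set (FZ := fun t => q * Y t * Z t - b * Z t).
  Ltac bb aX aY aW aZ := repeat first [ apply bnd_sub | apply bnd_add | apply bnd_mul | apply bnd_c
     | (apply aX; lra) | (apply aY; lra) | (apply aW; lra) | (apply aZ; lra) ].
  assert (aFX : exists M, forall t, t0 <= t -> Rabs (FX t) <= M).
  { eexists. intros t Ht. unfold FX. bb aX aY aW aZ. }
  destruct aFX as [MFX aFX].
  assert (aFW : exists M, forall t, t0 <= t -> Rabs (FW t) <= M).
  { eexists. intros t Ht. unfold FW. bb aX aY aW aZ. }
  destruct aFW as [MFW aFW].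
  assert (aFZ : exists M, forall t, t0 <= t -> Rabs (FZ t) <= M).
  { eexists. intros t Ht. unfold FZ. bb aX aY aW aZ. }
  destruct aFZ as [MFZ aFZ].
  assert (aFY : exists M, forall t, t0 + tau <= t -> Rabs (FY t) <= M).
  { eexists. intros t Ht. unfold FY. bb aX aY aW aZ. }
  destruct aFY as [MFY aFY].
  assert (DV : forall t, t0 < t -> is_derive (Lyap k dl p N q tau E Ei xs ys vs zs X Y W Z) t
      (dLexpr s d k dl p N mu q b E Ei xs ys vs zs (X t) (Y t) (W t) (Z t) (X (t - tau)) (W (t - tau)))).
  { intros t Ht. destruct (HD t Ht) as (D1 & D2 & D3 & D4). apply Lyap_deriv; auto. }
  assert (VN : forall t, t0 < t -> 0 <= Lyap k dl p N q tau E Ei xs ys vs zs X Y W Z t).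
  { intros t Ht. apply (Lyap_nonneg k dl p N q tau E Ei xs ys vs zs X Y W Z t); auto. }
  assert (LX : is_lim X p_infty xs).
  { apply lsq. eapply (barbalat _ _ (fun t => (X t - xs)^2) t0 (d / BX) (Rabs (Rabs 2 * (BX + Rabs xs) * MFX) + 1)).
    - apply Rdiv_lt_0_compat; lra.
    - assert (0 <= Rabs (Rabs 2 * (BX + Rabs xs) * MFX)) by apply Rabs_pos. lra.
    - exact DV.
    - intros t Ht. specialize (K1 t Ht). specialize (K2 t Ht).
      assert (HXt := PX t). assert (HXb : X t <= BX) by (destruct (HB t ltac:(lra)) as (_&_&_&_&h&_); exact h).
      assert (d / BX * (X t - xs)^2 <= d * (X t - xs)^2 / X t).
      { replace (d / BX * (X t - xs)^2) with ((d * (X t - xs)^2) * / BX) by (field; lra).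
        replace (d * (X t - xs)^2 / X t) with ((d * (X t - xs)^2) * / X t) by (field; lra).
        apply Rmult_le_compat_l. apply Rmult_le_pos. lra. apply pow2_ge_0. apply Rinv_le_contravar; lra. }
      lra.
    - exact VN.
    - intros; apply pow2_ge_0.
    - apply lip_weaken with (B := Rabs 2 * (BX + Rabs xs) * MFX).
      apply lip_of_bound with (df := fun t => 2 * (X t - xs) * FX t).
      + intros t Ht. apply dsq. apply (HD t Ht).
      + intros t Ht. apply bnd_mul. apply bnd_mul. apply bnd_c. apply bnd_sub. apply aX; lra. lra.
        apply aFX; lra. }
  Ltac bb2 aX aY aW aZ aFX aFY aFW aFZ := repeat first [
       (apply aX; lra) | (apply aY; lra) | (apply aW; lra) | (apply aZ; lra)
     | (apply aFX; lra) | (apply aFY; lra) | (apply aFW; lra) | (apply aFZ; lra)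
     | apply bnd_sub | apply bnd_add | apply bnd_mul | apply bnd_c ].
  assert (dFX : forall t, t0 < t -> is_derive FX t (0 - d * FX t - (k * FX t * W t + k * X t * FW t))).
  { intros t Ht. destruct (HD t Ht) as (D1 & D2 & D3 & D4). unfold FX.
    eapply deq. apply dminus. apply dminus. apply dconst. apply dscal. exact D1.
    apply dmul. apply dscal. exact D1. exact D3. unfold FW. ring. }
  assert (dFW : forall t, t0 < t -> is_derive FW t (N * dl * FY t - mu * FW t)).
  { intros t Ht. destruct (HD t Ht) as (D1 & D2 & D3 & D4). unfold FW.
    apply dminus; apply dscal; auto. }
  assert (dFY : forall t, t0 + tau < t -> is_derive FY t
     (k * E * FX (t - tau) * W (t - tau) + k * E * X (t - tau) * FW (t - tau) - dl * FY t
      - (p * FY t * Z t + p * Y t * FZ t))).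
  { intros t Ht. destruct (HD t ltac:(lra)) as (D1 & D2 & D3 & D4).
    destruct (HD (t - tau) ltac:(lra)) as (D1' & D2' & D3' & D4'). unfold FY.
    eapply deq. apply dminus. apply dminus.
    apply dmul. apply dscal. apply dshift. exact D1'. apply dshift. exact D3'.
    apply dscal. exact D2. apply dmul. apply dscal. exact D2. exact D4.
    unfold FX, FW, FZ. ring. }
  assert (LFX : is_lim FX p_infty 0).
  { eapply (deriv_to_zero X FX t0 (Rabs (Rabs d * MFX + (Rabs k * MFX * BW + Rabs k * BX * MFW) + 0) + 1) xs).
    - assert (0 <= Rabs (Rabs d * MFX + (Rabs k * MFX * BW + Rabs k * BX * MFW) + 0)) by apply Rabs_pos. lra.
    - intros t Ht. apply (HD t Ht).
    - apply lip_weaken. apply lip_of_bound with (df := fun t => 0 - d * FX t - (k * FX t * W t + k * X t * FW t)).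
      + exact dFX.
      + intros t Ht. eapply Rle_trans. bb2 aX aY aW aZ aFX aFY aFW aFZ. rewrite Rabs_R0. right; ring.
    - exact LX. }
  assert (LW : is_lim W p_infty vs).
  { apply lext with (fun t => (s - d * X t - FX t) / (k * X t)).
    - exists t0. intros t Ht. unfold FX. field. split. apply Rgt_not_eq, PX. lra.
    - replace vs with ((s - d * xs - 0) / (k * xs)) by (rewrite E1; field; lra).
      apply ldiv. apply lminus. apply lminus. apply lconst. apply (lmul (fun _ => d) X). apply lconst. auto. auto.
      apply (lmul (fun _ => k) X). apply lconst. auto. apply Rgt_not_eq, Rmult_lt_0_compat; lra. }
  assert (LFW : is_lim FW p_infty 0).
  { eapply (deriv_to_zero W FW (t0 + tau) (Rabs (Rabs N * Rabs dl * MFY + Rabs mu * MFW) + 1) vs).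
    - assert (0 <= Rabs (Rabs N * Rabs dl * MFY + Rabs mu * MFW)) by apply Rabs_pos. lra.
    - intros t Ht. apply (HD t ltac:(lra)).
    - apply lip_weaken. apply lip_of_bound with (df := fun t => N * dl * FY t - mu * FW t).
      + intros t Ht. apply dFW. lra.
      + intros t Ht. eapply Rle_trans. bb2 aX aY aW aZ aFX aFY aFW aFZ. right; ring.
    - exact LW. }
  assert (LY : is_lim Y p_infty ys).
  { apply lext with (fun t => (FW t + mu * W t) / (N * dl)).
    - exists t0. intros t Ht. unfold FW. field. lra.
    - replace ys with ((0 + mu * vs) / (N * dl)) by (rewrite <- E2; field; lra).
      apply ldiv. apply lplus. auto. apply (lmul (fun _ => mu) W). apply lconst. auto.
      apply lconst. apply Rgt_not_eq, Rmult_lt_0_compat; lra. }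
  assert (LZ : is_lim Z p_infty zs).
  { destruct (Req_dec ys 0) as [Hy0|Hy0].
    - assert (Hzs0 : zs = 0).
      { rewrite Hy0 in E3. assert (k * E * xs * vs = 0) by lra.
        assert (vs = 0). { assert (N * dl * ys = 0) by (rewrite Hy0; ring). rewrite E2 in H0.
          apply Rmult_integral in H0 as [H0|H0]; lra. }
        rewrite Hy0 in E6. assert (zs * b = 0) by lra. apply Rmult_integral in H1 as [H1|H1]; lra. }
      rewrite Hzs0. eapply (barbalat _ _ Z t0 (Ei * p * (b / q)) (Rabs MFZ + 1)).
      + apply Rmult_lt_0_compat. apply Rmult_lt_0_compat; lra. apply Rdiv_lt_0_compat; lra.
      + assert (0 <= Rabs MFZ) by apply Rabs_pos. lra.
      + exact DV.
      + intros t Ht. specialize (K1 t Ht). specialize (K2 t Ht). 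
        assert (Ei * p * (ys - b / q) * Z t = - (Ei * p * (b / q)) * Z t) by (rewrite Hy0; ring). lra.
      + exact VN.
      + intros; auto.
      + apply lip_weaken. apply lip_of_bound with (df := FZ).
        * intros t Ht. apply (HD t Ht).
        * intros t Ht. apply aFZ. lra.
    - assert (Hys' : 0 < ys) by lra.
      assert (LFY : is_lim FY p_infty 0).
      { eapply (deriv_to_zero Y FY (t0 + tau)
          (Rabs (Rabs k * Rabs E * MFX * BW + Rabs k * Rabs E * BX * MFW + Rabs dl * MFY
                + (Rabs p * MFY * BZ + Rabs p * BY * MFZ)) + 1) ys).
        - assert (0 <= Rabs (Rabs k * Rabs E * MFX * BW + Rabs k * Rabs E * BX * MFW + Rabs dl * MFY
                + (Rabs p * MFY * BZ + Rabs p * BY * MFZ))) by apply Rabs_pos. lra.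
        - intros t Ht. apply (HD t ltac:(lra)).
        - apply lip_weaken. apply lip_of_bound with (df := fun t =>
            k * E * FX (t - tau) * W (t - tau) + k * E * X (t - tau) * FW (t - tau) - dl * FY t
            - (p * FY t * Z t + p * Y t * FZ t)).
          + exact dFY.
          + intros t Ht. eapply Rle_trans. bb2 aX aY aW aZ aFX aFY aFW aFZ. right; ring.
        - exact LY. }
      apply lext with (fun t => (k * E * X (t - tau) * W (t - tau) - dl * Y t - FY t) / (p * Y t)).
      + exists t0. intros t Ht. unfold FY. field. split. apply Rgt_not_eq, (PY' Hys'). lra.
      + replace zs with ((k * E * xs * vs - dl * ys - 0) / (p * ys)).
        2:{ rewrite E3. field. lra. }
        apply ldiv. apply lminus. apply lminus.
        apply (lmul (fun t => k * E * X (t - tau)) (fun t => W (t - tau))).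
        apply (lmul (fun _ => k * E) (fun t => X (t - tau))). apply lconst. apply lshift; auto.
        apply lshift; auto.
        apply (lmul (fun _ => dl) Y). apply lconst. auto. auto.
        apply (lmul (fun _ => p) Y). apply lconst. auto.
        apply Rgt_not_eq, Rmult_lt_0_compat; lra. }
  auto.
Qed.



Lemma Rmax_abs a w : Rmax a w = (a + w + Rabs (a - w)) / 2.
Proof. unfold Rmax. destruct (Rle_dec a w).
  rewrite Rabs_left1 by lra. field. rewrite Rabs_right by lra. field. Qed.

Lemma cRmax a t : continuous (fun w => Rmax a w) t.
Proof.
  apply (cext (fun w => (a + w + Rabs (a - w)) / 2)). intros; rewrite Rmax_abs; auto.
  apply (cext (fun w => /2 * (a + w + Rabs (a - w)))). intros; unfold Rdiv; ring.
  apply cscal. apply cplus. apply cplus. apply cconst.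
  apply (continuous_id (U:=R_UniformSpace)).
  apply (continuous_Rabs_comp (fun w => a - w)). apply cminus. apply cconst.
  apply (continuous_id (U:=R_UniformSpace)).
Qed.

Lemma cont_eps (f : R -> R) x : continuous f x ->
  forall eps, 0 < eps -> exists del, 0 < del /\ forall y, Rabs (y - x) < del -> Rabs (f y - f x) < eps.
Proof.
  intros H eps He. apply continuity_pt_filterlim in H.
  destruct (H eps He) as [del [Hd Hd']]. exists del. split; auto.
  intros y Hy. destruct (Req_dec y x) as [->|Hne].
  - unfold Rminus. rewrite Rplus_opp_r, Rabs_R0. auto.
  - apply Hd'. split. split. constructor. auto. simpl; unfold R_dist; auto.
Qed.

Definition allpos (s d k dl p N mu q b tau : R) : Prop :=
  0 < s /\ 0 < d /\ 0 < k /\ 0 < dl /\ 0 < p /\ 0 < N /\ 0 < mu /\ 0 < q /\ 0 < b /\ 0 < tau.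

Lemma clamp_cont_gen (f : R -> R) a : 0 <= a ->
  (forall t, 0 <= t -> continuous (fun w => f (Rmax 0 w)) t) ->
  (forall t, 0 < t -> continuous f t) ->
  forall t, continuous (fun w => f (Rmax a w)) t.
Proof.
  intros Ha H0 H1. destruct Ha as [Ha|Ha].
  - apply clamp_cont_global. intros t Ht.
    apply (continuous_comp (fun w => Rmax a w) f t). apply cRmax.
    apply H1. apply Rlt_le_trans with a; auto. apply Rmax_l.
  - subst a. apply clamp_cont_global. auto.
Qed.

Lemma sol_facts s d k dl p N mu q b tau phi1 phi3 y0 z0 x y v z :
  is_solution s d k dl p N mu q b tau phi1 phi3 y0 z0 x y v z ->
  forall a, 0 <= a -> forall t,
    continuous (fun w => x (Rmax a w)) t /\ continuous (fun w => y (Rmax a w)) t /\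
    continuous (fun w => v (Rmax a w)) t /\ continuous (fun w => z (Rmax a w)) t.
Proof.
  intros (Hin & Hy0 & Hz0 & Hc & Hd) a Ha t.
  repeat split; apply clamp_cont_gen; auto; intros u Hu;
    try (apply (Hc u Hu)); destruct (Hd u Hu) as (D1 & D2 & D3 & D4); eapply derive_cont; eauto.
Qed.

Lemma spos' (u g h : R -> R) (a b : R) :
  a < b ->
  (forall t, continuous (fun w => h (Rmax a w)) t) ->
  (forall t, continuous (fun w => u (Rmax a w)) t) ->
  (forall t, a < t < b -> is_derive u t (g t - h t * u t)) ->
  ((forall t, a < t < b -> 0 <= g t) -> (0 <= u a -> 0 <= u b) /\ (0 < u a -> 0 < u b)) /\
  ((forall t, a < t < b -> 0 < g t) -> 0 <= u a -> 0 < u b).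
Proof.
  intros Hab Hh Hu Hd. destruct (spos u g h a b Hab Hh (fun t _ => Hu t) Hd) as [K [HK [H1 H2]]].
  split.
  - intros Hg. specialize (H1 Hg). split; intros Ha.
    + destruct (Rle_dec 0 (u b)); auto. assert (K * u b < 0) by (apply Rmult_pos_neg; lra). lra.
    + destruct (Rlt_dec 0 (u b)); auto. assert (K * u b <= 0) by (apply Rmult_le_0_l; lra). lra.
  - intros Hg Ha. specialize (H2 Hg).
    destruct (Rlt_dec 0 (u b)); auto. assert (K * u b <= 0) by (apply Rmult_le_0_l; lra). lra.
Qed.


Lemma comp_steps s d k dl p N mu q b tau phi1 phi3 y0 z0 x y v z :
  allpos s d k dl p N mu q b tau ->
  is_solution s d k dl p N mu q b tau phi1 phi3 y0 z0 x y v z ->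
  forall a bb, 0 <= a < bb ->
  (0 <= x a -> 0 < x bb) /\
  ((0 <= z a -> 0 <= z bb) /\ (0 < z a -> 0 < z bb)) /\
  ((forall t, a < t < bb -> 0 <= x (t - tau) * v (t - tau)) -> (0 <= y a -> 0 <= y bb) /\ (0 < y a -> 0 < y bb)) /\
  ((forall t, a < t < bb -> 0 < x (t - tau) * v (t - tau)) -> 0 <= y a -> 0 < y bb) /\
  ((forall t, a < t < bb -> 0 <= y t) -> (0 <= v a -> 0 <= v bb) /\ (0 < v a -> 0 < v bb)) /\
  ((forall t, a < t < bb -> 0 < y t) -> 0 <= v a -> 0 < v bb).
Proof.
  intros HP HS a bb Hab.
  destruct HP as (Hs & Hd & Hk & Hdl & Hp & HN & Hmu & Hq & Hb & Htau).
  assert (HS' := HS). destruct HS' as (Hin & Hy0 & Hz0 & Hc & HD).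
  assert (F := sol_facts s d k dl p N mu q b tau phi1 phi3 y0 z0 x y v z HS a (proj1 Hab)).
  assert (HE := exp_pos (- (dl * tau))).
  split; [|split; [|split; [|split; [|split]]]].
  - intros Hxa. destruct (spos' x (fun _ => s) (fun w => d + k * v w) a bb (proj2 Hab)) as [_ H2].
    + intros t. apply cplus. apply cconst. apply cscal. apply F.
    + intros t; apply F.
    + intros t Ht. destruct (HD t ltac:(lra)) as (D1 & D2 & D3 & D4).
      eapply deq. first [exact D1 | exact D2 | exact D3 | exact D4]. ring.
    + apply H2; auto.
  - destruct (spos' z (fun _ => 0) (fun w => b - q * y w) a bb (proj2 Hab)) as [H1 _].
    + intros t. apply cminus. apply cconst. apply cscal. apply F.
    + intros t; apply F.
    + intros t Ht. destruct (HD t ltac:(lra)) as (D1 & D2 & D3 & D4).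
      eapply deq. first [exact D1 | exact D2 | exact D3 | exact D4]. ring.
    + apply H1. intros; lra.
  - intros Hg. destruct (spos' y (fun t => k * exp (- (dl * tau)) * x (t - tau) * v (t - tau)) (fun w => dl + p * z w) a bb (proj2 Hab)) as [H1 _].
    + intros t. apply cplus. apply cconst. apply cscal. apply F.
    + intros t; apply F.
    + intros t Ht. destruct (HD t ltac:(lra)) as (D1 & D2 & D3 & D4).
      eapply deq. first [exact D1 | exact D2 | exact D3 | exact D4]. ring.
    + apply H1. intros t Ht. specialize (Hg t Ht).
      replace (k * exp (- (dl * tau)) * x (t - tau) * v (t - tau)) with ((k * exp (- (dl * tau))) * (x (t - tau) * v (t - tau))) by ring.
      apply Rmult_le_pos; auto. apply Rmult_le_pos; lra.
  - intros Hg. destruct (spos' y (fun t => k * exp (- (dl * tau)) * x (t - tau) * v (t - tau)) (fun w => dl + p * z w) a bb (proj2 Hab)) as [_ H2].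
    + intros t. apply cplus. apply cconst. apply cscal. apply F.
    + intros t; apply F.
    + intros t Ht. destruct (HD t ltac:(lra)) as (D1 & D2 & D3 & D4).
      eapply deq. first [exact D1 | exact D2 | exact D3 | exact D4]. ring.
    + apply H2. intros t Ht. specialize (Hg t Ht).
      replace (k * exp (- (dl * tau)) * x (t - tau) * v (t - tau)) with ((k * exp (- (dl * tau))) * (x (t - tau) * v (t - tau))) by ring.
      apply Rmult_lt_0_compat; auto. apply Rmult_lt_0_compat; lra.
  - intros Hg. destruct (spos' v (fun t => N * dl * y t) (fun _ => mu) a bb (proj2 Hab)) as [H1 _].
    + intros t. apply cconst.
    + intros t; apply F.
    + intros t Ht. destruct (HD t ltac:(lra)) as (D1 & D2 & D3 & D4).
      eapply deq. first [exact D1 | exact D2 | exact D3 | exact D4]. ring.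
    + apply H1. intros t Ht. specialize (Hg t Ht). apply Rmult_le_pos; auto. apply Rmult_le_pos; lra.
  - intros Hg. destruct (spos' v (fun t => N * dl * y t) (fun _ => mu) a bb (proj2 Hab)) as [_ H2].
    + intros t. apply cconst.
    + intros t; apply F.
    + intros t Ht. destruct (HD t ltac:(lra)) as (D1 & D2 & D3 & D4).
      eapply deq. first [exact D1 | exact D2 | exact D3 | exact D4]. ring.
    + apply H2. intros t Ht. specialize (Hg t Ht). apply Rmult_lt_0_compat; auto. apply Rmult_lt_0_compat; lra.
Qed.

Lemma sol_nonneg s d k dl p N mu q b tau phi1 phi3 y0 z0 x y v z :
  allpos s d k dl p N mu q b tau -> admissible tau phi1 phi3 y0 z0 ->
  is_solution s d k dl p N mu q b tau phi1 phi3 y0 z0 x y v z ->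
  (forall t, 0 < t -> 0 < x t) /\ (forall t, - tau <= t -> 0 <= x t) /\
  (forall t, 0 <= t -> 0 <= y t /\ 0 <= v t /\ 0 <= z t) /\ (forall t, - tau <= t -> 0 <= v t).
Proof.
  intros HP HA HS.
  assert (CS := comp_steps s d k dl p N mu q b tau phi1 phi3 y0 z0 x y v z HP HS).
  assert (HP' := HP). destruct HP' as (Hs & Hd & Hk & Hdl & Hp & HN & Hmu & Hq & Hb & Htau).
  destruct HA as (C1 & C3 & Hphi & Hy0p & Hz0p).
  assert (HS' := HS). destruct HS' as (Hin & Hy0 & Hz0 & Hc & HD).
  assert (Hhist : forall th, - tau <= th <= 0 -> 0 <= x th /\ 0 <= v th).
  { intros th Hth. destruct (Hin th Hth) as [e1 e3]. rewrite e1, e3. apply Hphi; auto. }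
  assert (X0 : 0 <= x 0) by (apply Hhist; lra).
  assert (Xp : forall t, 0 < t -> 0 < x t).
  { intros t Ht. apply (CS 0 t ltac:(lra)). auto. }
  assert (Xn : forall t, - tau <= t -> 0 <= x t).
  { intros t Ht. destruct (Rle_dec t 0). apply Hhist; lra. left; apply Xp; lra. }
  assert (Zn : forall t, 0 <= t -> 0 <= z t).
  { intros t Ht. destruct Ht as [Ht| <-]. apply (CS 0 t ltac:(lra)). rewrite Hz0; auto. rewrite Hz0; auto. }
  assert (Q : forall n : nat, forall t, 0 <= t <= INR n * tau -> 0 <= y t /\ 0 <= v t).
  { induction n as [|n IH].
    - intros t Ht. simpl in Ht. assert (t = 0) by lra. subst t. rewrite Hy0. split; auto. apply Hhist; lra.
    - assert (Yn : forall t, 0 <= t <= INR (S n) * tau -> 0 <= y t).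
      { intros t Ht. destruct (proj1 Ht) as [Ht0| <-]; [|rewrite Hy0; auto].
        apply (CS 0 t ltac:(lra)); [|rewrite Hy0; auto].
        intros u Hu. destruct (Rle_dec (u - tau) 0).
        - apply Rmult_le_pos; apply Hhist; lra.
        - apply Rmult_le_pos. left; apply Xp; lra. apply IH. rewrite S_INR in Ht. lra. }
      intros t Ht. split. apply Yn; auto.
      destruct (proj1 Ht) as [Ht0| <-]; [|apply Hhist; lra].
      apply (CS 0 t ltac:(lra)). intros u Hu. apply Yn. lra. apply Hhist; lra. }
  assert (Qall : forall t, 0 <= t -> 0 <= y t /\ 0 <= v t).
  { intros t Ht. destruct (INR_unbounded (t / tau)) as [n Hn]. apply (Q n). split; auto.
    apply Rlt_le. apply Rmult_lt_reg_r with (/ tau). apply Rinv_0_lt_compat; lra.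
    replace (INR n * tau * / tau) with (INR n) by (field; lra). unfold Rdiv in Hn. lra. }
  split; auto. split; auto. split.
  - intros t Ht. destruct (Qall t Ht). repeat split; auto.
  - intros t Ht. destruct (Rle_dec t 0). apply Hhist; lra. apply Qall; lra.
Qed.

Lemma sol_strict s d k dl p N mu q b tau phi1 phi3 y0 z0 x y v z :
  allpos s d k dl p N mu q b tau -> admissible tau phi1 phi3 y0 z0 ->
  is_solution s d k dl p N mu q b tau phi1 phi3 y0 z0 x y v z ->
  (forall a, 0 <= a -> 0 < y a -> forall t, a <= t -> 0 < y t) /\
  (forall a, 0 <= a -> 0 < v a -> forall t, a <= t -> 0 < v t) /\
  (forall a, 0 <= a -> 0 < y a -> forall t, a < t -> 0 < v t) /\
  (0 < z0 -> forall t, 0 <= t -> 0 < z t).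
Proof.
  intros HP HA HS.
  assert (CS := comp_steps s d k dl p N mu q b tau phi1 phi3 y0 z0 x y v z HP HS).
  destruct (sol_nonneg s d k dl p N mu q b tau phi1 phi3 y0 z0 x y v z HP HA HS) as (Xp & Xn & Nn & Vn).
  assert (HS' := HS). destruct HS' as (Hin & Hy0 & Hz0 & Hc & HD).
  assert (Ya : forall a, 0 <= a -> 0 < y a -> forall t, a <= t -> 0 < y t).
  { intros a Ha Hya t Ht. destruct Ht as [Ht| <-]; auto.
    destruct (CS a t ltac:(lra)) as (cx & cz & cy1 & cy2 & cv1 & cv2).
    apply cy1; auto. intros u Hu. apply Rmult_le_pos. apply Xn; lra. apply Vn; lra. }
  split; auto. split.
  - intros a Ha Hva t Ht. destruct Ht as [Ht| <-]; auto.
    destruct (CS a t ltac:(lra)) as (cx & cz & cy1 & cy2 & cv1 & cv2).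
    apply cv1; auto. intros u Hu. apply Nn; lra.
  - split.
    + intros a Ha Hya t Ht. destruct (CS a t ltac:(lra)) as (cx & cz & cy1 & cy2 & cv1 & cv2).
      apply cv2. intros u Hu. apply (Ya a); auto; lra.
      apply Nn; lra.
    + intros Hz t Ht. destruct Ht as [Ht| <-].
      destruct (CS 0 t ltac:(lra)) as (cx & cz & cy1 & cy2 & cv1 & cv2).
      apply cz. rewrite Hz0; auto. rewrite Hz0; auto.
Qed.

Lemma sol_eventual s d k dl p N mu q b tau phi1 phi3 y0 z0 x y v z :
  allpos s d k dl p N mu q b tau -> admissible tau phi1 phi3 y0 z0 ->
  is_solution s d k dl p N mu q b tau phi1 phi3 y0 z0 x y v z ->
  (y0 + phi1 (- tau) * phi3 (- tau) > 0 \/ phi3 0 > 0) ->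
  exists T, 0 < T /\ forall t, T <= t -> 0 < y t /\ 0 < v t.
Proof.
  intros HP HA HS Hcond.
  assert (CS := comp_steps s d k dl p N mu q b tau phi1 phi3 y0 z0 x y v z HP HS).
  destruct (sol_nonneg s d k dl p N mu q b tau phi1 phi3 y0 z0 x y v z HP HA HS) as (Xp & Xn & Nn & Vn).
  destruct (sol_strict s d k dl p N mu q b tau phi1 phi3 y0 z0 x y v z HP HA HS) as (Ya & Va & YVa & _).
  assert (HS' := HS). destruct HS' as (Hin & Hy0 & Hz0 & Hc & HD).
  assert (HA' := HA). destruct HA' as (C1 & C3 & Hphi & Hy0p & Hz0p).
  assert (HP' := HP). destruct HP' as (Hs & Hd & Hk & Hdl & Hp & HN & Hmu & Hq & Hb & Htau).
  assert (fromy : forall a, 0 <= a -> 0 < y a -> exists T, 0 < T /\ forall t, T <= t -> 0 < y t /\ 0 < v t).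
  { intros a Ha Hya. exists (a + 1). split. lra. intros t Ht. split. apply (Ya a); auto; lra.
    apply (YVa a); auto; lra. }
  destruct Hcond as [Hc1|Hc2].
  - destruct (Rlt_dec 0 y0) as [Hy|Hy].
    + apply (fromy 0). lra. rewrite Hy0; auto.
    + assert (Hpp : 0 < phi1 (- tau) * phi3 (- tau)) by lra.
      set (P := fun w => phi1 (Rmax (- tau) (Rmin 0 w)) * phi3 (Rmax (- tau) (Rmin 0 w))).
      assert (HPc : continuous P (- tau)) by (apply cmul; auto).
      assert (HPv : P (- tau) = phi1 (- tau) * phi3 (- tau)).
      { unfold P. rewrite Rmin_right by lra. rewrite Rmax_left by lra. auto. }
      destruct (cont_eps P (- tau) HPc (P (- tau) / 2)) as [del [Hdel Hdel']]. lra.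
      set (e := Rmin del tau / 2).
      assert (He : 0 < e) by (unfold e; apply Rmin_case; lra).
      assert (He2 : e < del /\ e < tau).
      { assert (Hm : 0 < Rmin del tau) by (apply Rmin_case; lra).
        assert (Rmin del tau <= del) by apply Rmin_l. assert (Rmin del tau <= tau) by apply Rmin_r.
        unfold e; lra. }
      apply (fromy e). lra.
      destruct (CS 0 e ltac:(lra)) as (cx & cz & cy1 & cy2 & cv1 & cv2).
      apply cy2.
      * intros u Hu. destruct (Hin (u - tau) ltac:(lra)) as [e1 e3]. rewrite e1, e3.
        assert (Hx := Hdel' (u - tau) ltac:(rewrite Rabs_right; lra)).
        apply Rabs_lt_between in Hx.
        assert (Hu' : P (u - tau) = phi1 (u - tau) * phi3 (u - tau)).
        { unfold P. rewrite Rmin_right by lra. rewrite Rmax_right by lra. auto. }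
        lra.
      * rewrite Hy0; lra.
  - assert (Hv0 : 0 < v 0). { destruct (Hin 0 ltac:(lra)) as [_ e3]. rewrite e3. lra. }
    apply (fromy (tau + 1)). lra.
    destruct (CS tau (tau + 1) ltac:(lra)) as (cx & cz & cy1 & cy2 & cv1 & cv2).
    apply cy2.
    + intros u Hu. apply Rmult_lt_0_compat. apply Xp; lra. apply (Va 0); lra.
    + apply Nn; lra.
Qed.


Definition capa (a : R) := if Rlt_dec 0 a then a else 1.

Lemma capa_pos a : 0 < capa a.
Proof. unfold capa. destruct (Rlt_dec 0 a); lra. Qed.

Lemma capa_use a eta : 0 <= a -> 2 * eta <= capa a -> a = 0 \/ 2 * eta <= a.
Proof. unfold capa. intros Ha. destruct (Rlt_dec 0 a); intros; [right|left]; lra. Qed.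

Lemma close_from a u H D eps : 0 <= a -> 0 <= H -> H <= D -> 0 < eps -> D <= eps / 4 ->
  D * (16 * (a + 1)) <= eps * eps ->
  Rabs (u - a) <= H + 2 * sqrt a * sqrt H -> Rabs (u - a) < eps.
Proof.
  intros Ha HH HHD He HD1 HD2 Hc.
  assert (S1 : sqrt a * sqrt H <= eps / 4).
  { rewrite <- sqrt_mult by lra.
    replace (eps / 4) with (sqrt ((eps / 4) * (eps / 4))) by (rewrite sqrt_square; lra).
    apply sqrt_le_1_alt.
    assert (a * H <= (a + 1) * D).
    { apply Rmult_le_compat; lra. }
    assert ((a + 1) * D * 16 <= eps * eps) by lra. lra. }
  lra.
Qed.

Lemma E_Ei dl tau : exp (- (dl * tau)) * exp (dl * tau) = 1.
Proof. rewrite <- exp_plus. replace (- (dl * tau) + dl * tau) with 0 by ring. apply exp_0. Qed.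

Lemma gen_attract s d k dl p N mu q b tau xs ys vs zs phi1 phi3 y0 z0 x y v z :
  allpos s d k dl p N mu q b tau ->
  eq_ok s d k dl p N mu q b (exp (- (dl * tau))) (exp (dl * tau)) xs ys vs zs ->
  admissible tau phi1 phi3 y0 z0 ->
  is_solution s d k dl p N mu q b tau phi1 phi3 y0 z0 x y v z ->
  (exists T, 0 < T /\ forall t, T <= t -> (0 < ys -> 0 < y t) /\ (0 < vs -> 0 < v t) /\ (0 < zs -> 0 < z t)) ->
  is_lim x p_infty xs /\ is_lim y p_infty ys /\ is_lim v p_infty vs /\ is_lim z p_infty zs.
Proof.
  intros HP HE HA HS [T [HT HTp]].
  destruct (sol_nonneg s d k dl p N mu q b tau phi1 phi3 y0 z0 x y v z HP HA HS) as (Xp & Xn & Nn & Vn).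
  assert (HS' := HS). destruct HS' as (Hin & Hy0 & Hz0 & Hc & HD).
  assert (HP' := HP). destruct HP' as (Hs & Hd & Hk & Hdl & Hp & HN & Hmu & Hq & Hb & Htau).
  assert (F := sol_facts s d k dl p N mu q b tau phi1 phi3 y0 z0 x y v z HS T ltac:(lra)).
  set (X := fun u => x (Rmax T u)). set (Y := fun u => y (Rmax T u)).
  set (W := fun u => v (Rmax T u)). set (Z := fun u => z (Rmax T u)).
  assert (RT : forall u, T <= Rmax T u) by (intros; apply Rmax_l).
  assert (HPos : posH xs ys vs zs X Y W Z).
  { constructor; intros; unfold X, Y, W, Z.
    - apply Xp. specialize (RT u). lra.
    - apply Nn. specialize (RT u). lra.
    - apply (HTp (Rmax T u) (RT u)); auto.
    - apply Nn. specialize (RT u). lra.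
    - apply (HTp (Rmax T u) (RT u)); auto.
    - apply Nn. specialize (RT u). lra.
    - apply (HTp (Rmax T u) (RT u)); auto.
    - apply F. - apply F. - apply F. - apply F. }
  assert (HDD : dde_ok s d k dl p N mu q b tau (exp (- (dl * tau))) X Y W Z (T + tau)).
  { intros t Ht. destruct (HD t ltac:(lra)) as (D1 & D2 & D3 & D4).
    assert (e0 : Rmax T t = t) by (apply Rmax_right; lra).
    assert (e1 : Rmax T (t - tau) = t - tau) by (apply Rmax_right; lra).
    unfold X, Y, W, Z. rewrite e0, e1.
    split; [|split; [|split]]; apply is_derive_clamp; auto; lra. }
  assert (HPO : params_ok s d k dl p N mu q b tau (exp (- (dl * tau))) (exp (dl * tau))).
  { repeat split; auto. apply exp_pos. apply E_Ei. }
  destruct (core_attract s d k dl p N mu q b tau _ _ xs ys vs zs X Y W Z (T + tau) HPO HE HPos HDD)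
    as (L1 & L2 & L3 & L4).
  assert (ext : forall f : R -> R, forall l : R, is_lim (fun u => f (Rmax T u)) p_infty l -> is_lim f p_infty l).
  { intros f l H. apply lext with (fun u => f (Rmax T u)); auto. exists T. intros t Ht.
    rewrite Rmax_right; lra. }
  repeat split; apply ext; auto.
Qed.

Lemma Hf_div c h C : 0 < c -> c * h <= C -> h <= C / c.
Proof. intros Hc H. apply Rmult_le_reg_l with c; auto. replace (c * (C / c)) with C by (field; lra). auto. Qed.

Lemma gen_stab s d k dl p N mu q b tau xs ys vs zs :
  allpos s d k dl p N mu q b tau ->
  eq_ok s d k dl p N mu q b (exp (- (dl * tau))) (exp (dl * tau)) xs ys vs zs ->
  forall eps, 0 < eps -> exists eta, 0 < eta /\
     forall phi1 phi3 y0 z0 x y v z,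
       admissible tau phi1 phi3 y0 z0 ->
       (forall th, - tau <= th <= 0 ->
          Rabs (phi1 th - xs) < eta /\ Rabs (phi3 th - vs) < eta) ->
       Rabs (y0 - ys) < eta -> Rabs (z0 - zs) < eta ->
       is_solution s d k dl p N mu q b tau phi1 phi3 y0 z0 x y v z ->
       forall t, 0 <= t ->
         Rabs (x t - xs) < eps /\ Rabs (y t - ys) < eps /\
         Rabs (v t - vs) < eps /\ Rabs (z t - zs) < eps.
Proof.
  intros HP HE eps Heps.
  assert (HP' := HP). destruct HP' as (Hs & Hd & Hk & Hdl & Hp & HN & Hmu & Hq & Hb & Htau).
  assert (HE' := HE). destruct HE' as (Hxs & Hys & Hvs & Hzs & E1 & E2 & E3 & E4 & E5 & E6).
  set (E := exp (- (dl * tau))) in *. set (Ei := exp (dl * tau)) in *.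
  assert (HE0 : 0 < E) by apply exp_pos. assert (HEi0 : 0 < Ei) by apply exp_pos.
  assert (HEEi : E * Ei = 1) by apply E_Ei.
  set (cv := Ei * (dl + p * zs) / (N * dl)). set (cz := Ei * p / q).
  assert (Hcv : 0 < cv).
  { apply Rdiv_lt_0_compat. apply Rmult_lt_0_compat; auto. assert (0 <= p * zs) by (apply Rmult_le_pos; lra). lra.
    apply Rmult_lt_0_compat; lra. }
  assert (Hcz : 0 < cz) by (apply Rdiv_lt_0_compat; [apply Rmult_lt_0_compat|]; lra).
  set (m := Rmin (Rmin 1 Ei) (Rmin cv cz)).
  assert (Hm : 0 < m) by (unfold m; repeat apply Rmin_case; lra).
  assert (Hm1 : m <= 1 /\ m <= Ei /\ m <= cv /\ m <= cz).
  { unfold m. repeat split.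
    - eapply Rle_trans. apply Rmin_l. apply Rmin_l.
    - eapply Rle_trans. apply Rmin_l. apply Rmin_r.
    - eapply Rle_trans. apply Rmin_r. apply Rmin_l.
    - eapply Rle_trans. apply Rmin_r. apply Rmin_r. }
  set (A := xs + ys + vs + zs + 1).
  assert (HA : 0 < A) by (unfold A; lra).
  set (rho := Rmin (eps / 4) (eps * eps / (16 * A))).
  assert (Hrho : 0 < rho).
  { unfold rho. apply Rmin_case. lra. apply Rdiv_lt_0_compat. apply Rmult_lt_0_compat; lra. lra. }
  assert (Hrho1 : rho <= eps / 4) by apply Rmin_l.
  assert (Hrho2 : forall a, 0 <= a -> a <= A - 1 -> rho * (16 * (a + 1)) <= eps * eps).
  { intros a Ha Ha'. assert (rho <= eps * eps / (16 * A)) by apply Rmin_r.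
    assert (rho * (16 * (a + 1)) <= eps * eps / (16 * A) * (16 * A)).
    { apply Rmult_le_compat; lra. }
    replace (eps * eps / (16 * A) * (16 * A)) with (eps * eps) in H0 by (field; lra). auto. }
  set (K := 1 + Ei + cv + cz + k * tau * (xs + vs + 1)).
  assert (HK : 0 < K).
  { unfold K. assert (0 <= k * tau * (xs + vs + 1)) by (apply Rmult_le_pos; [apply Rmult_le_pos|]; lra). lra. }
  set (ws := xs * vs).
  set (eta := Rmin (Rmin (Rmin 1 (m * rho / K)) (Rmin (capa xs / 2) (capa ys / 2)))
                   (Rmin (Rmin (capa vs / 2) (capa zs / 2)) (capa ws / (2 * (xs + vs + 1))))).
  assert (Ca := capa_pos). 
  assert (Heta : 0 < eta).
  { unfold eta. assert (Cx := Ca xs). assert (Cy := Ca ys). assert (Cv := Ca vs). assert (Cz := Ca zs).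
    apply Rmin_pos; apply Rmin_pos; try apply Rmin_pos; try lra.
    apply Rdiv_lt_0_compat; [apply Rmult_lt_0_compat|]; lra.
    apply Rdiv_lt_0_compat. apply Ca. lra. }
  assert (Het : eta <= 1 /\ eta <= m * rho / K /\ 2 * eta <= capa xs /\ 2 * eta <= capa ys /\
                2 * eta <= capa vs /\ 2 * eta <= capa zs /\ eta <= capa ws / (2 * (xs + vs + 1))).
  { unfold eta. set (a1 := Rmin 1 (m * rho / K)). set (a2 := Rmin (capa xs / 2) (capa ys / 2)).
    set (a3 := Rmin (capa vs / 2) (capa zs / 2)). set (a4 := capa ws / (2 * (xs + vs + 1))).
    assert (Rmin (Rmin a1 a2) (Rmin a3 a4) <= Rmin a1 a2) by apply Rmin_l.
    assert (Rmin (Rmin a1 a2) (Rmin a3 a4) <= Rmin a3 a4) by apply Rmin_r.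
    assert (Rmin a1 a2 <= a1) by apply Rmin_l. assert (Rmin a1 a2 <= a2) by apply Rmin_r.
    assert (Rmin a3 a4 <= a3) by apply Rmin_l. assert (Rmin a3 a4 <= a4) by apply Rmin_r.
    assert (a1 <= 1) by apply Rmin_l. assert (a1 <= m * rho / K) by apply Rmin_r.
    assert (a2 <= capa xs / 2) by apply Rmin_l. assert (a2 <= capa ys / 2) by apply Rmin_r.
    assert (a3 <= capa vs / 2) by apply Rmin_l. assert (a3 <= capa zs / 2) by apply Rmin_r.
    repeat split; lra. }
  destruct Het as (Het1 & Het2 & Het3 & Het4 & Het5 & Het6 & Het7).
  exists eta. split; auto.
  intros phi1 phi3 y0 z0 x y v z HA0 Hnear Hy0n Hz0n HS t Ht.
  destruct (sol_nonneg s d k dl p N mu q b tau phi1 phi3 y0 z0 x y v z HP HA0 HS) as (Xp & Xn & Nn & Vn).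
  destruct (sol_strict s d k dl p N mu q b tau phi1 phi3 y0 z0 x y v z HP HA0 HS) as (Ya & Va & YVa & Zs).
  assert (HS' := HS). destruct HS' as (Hin & Hy0 & Hz0 & Hc & HD).
  assert (HA' := HA0). destruct HA' as (C1 & C3 & Hphi & Hy0p & Hz0p).
  assert (F := sol_facts s d k dl p N mu q b tau phi1 phi3 y0 z0 x y v z HS 0 ltac:(lra)).
  set (X := fun u => x (Rmax (- tau) u)). set (W := fun u => v (Rmax (- tau) u)).
  set (Y := fun u => y (Rmax 0 u)). set (Z := fun u => z (Rmax 0 u)).
  assert (Rm : forall u, - tau <= Rmax (- tau) u) by (intros; apply Rmax_l).
  assert (Xid : forall u, X u = phi1 (Rmax (- tau) (Rmin 0 u)) + x (Rmax 0 u) - phi1 0).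
  { intros u. unfold X. destruct (Rle_dec u 0).
    - rewrite (Rmin_right 0 u) by lra. rewrite (Rmax_left 0 u) by lra.
      destruct (Hin (Rmax (- tau) u)) as [e1 _]. split. apply Rmax_l. apply Rmax_lub; lra.
      destruct (Hin 0) as [e0 _]. lra. lra.
    - rewrite (Rmin_left 0 u) by lra. rewrite (Rmax_right 0 u) by lra. rewrite (Rmax_right (- tau) 0) by lra.
      rewrite (Rmax_right (- tau) u) by lra. ring. }
  assert (Wid : forall u, W u = phi3 (Rmax (- tau) (Rmin 0 u)) + v (Rmax 0 u) - phi3 0).
  { intros u. unfold W. destruct (Rle_dec u 0).
    - rewrite (Rmin_right 0 u) by lra. rewrite (Rmax_left 0 u) by lra.
      destruct (Hin (Rmax (- tau) u)) as [_ e1]. split. apply Rmax_l. apply Rmax_lub; lra.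
      destruct (Hin 0) as [_ e0]. lra. lra.
    - rewrite (Rmin_left 0 u) by lra. rewrite (Rmax_right 0 u) by lra. rewrite (Rmax_right (- tau) 0) by lra.
      rewrite (Rmax_right (- tau) u) by lra. ring. }
  assert (hx : forall r, - tau <= r <= 0 -> xs / 2 < x r).
  { intros r Hr. destruct (Hin r Hr) as [e1 _]. rewrite e1. destruct (Hnear r Hr) as [h1 _].
    apply Rabs_lt_between in h1. assert (capa_xs : capa xs = xs) by (unfold capa; destruct (Rlt_dec 0 xs); lra).
    lra. }
  assert (hv : 0 < vs -> forall r, - tau <= r <= 0 -> 0 < v r).
  { intros Hv r Hr. destruct (Hin r Hr) as [_ e1]. rewrite e1. destruct (Hnear r Hr) as [_ h1].
    apply Rabs_lt_between in h1. assert (capa vs = vs) by (unfold capa; destruct (Rlt_dec 0 vs); lra).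
    lra. }
  assert (HPos : posH xs ys vs zs X Y W Z).
  { constructor; intros; unfold X, Y, W, Z.
    - specialize (Rm u). destruct (Rle_dec (Rmax (- tau) u) 0).
      + assert (xs / 2 < x (Rmax (- tau) u)) by (apply hx; lra). lra.
      + apply Xp; lra.
    - apply Nn. apply Rmax_l.
    - apply (Ya 0). lra. rewrite Hy0. apply Rabs_lt_between in Hy0n.
      assert (capa ys = ys) by (unfold capa; destruct (Rlt_dec 0 ys); lra). lra. apply Rmax_l.
    - apply Vn. apply Rm.
    - specialize (Rm u). destruct (Rle_dec (Rmax (- tau) u) 0).
      + apply hv; auto; lra.
      + apply (Va 0). lra. apply hv; auto; lra. lra.
    - apply Nn. apply Rmax_l.
    - apply Zs. rewrite <- Hz0 in Hz0n |- *. apply Rabs_lt_between in Hz0n.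
      assert (capa zs = zs) by (unfold capa; destruct (Rlt_dec 0 zs); lra). lra. apply Rmax_l.
    - apply (cext (fun u => phi1 (Rmax (- tau) (Rmin 0 u)) + x (Rmax 0 u) - phi1 0)).
      intros w; symmetry; apply Xid. apply cminus. apply cplus. apply C1. apply F. apply cconst.
    - apply F.
    - apply (cext (fun u => phi3 (Rmax (- tau) (Rmin 0 u)) + v (Rmax 0 u) - phi3 0)).
      intros w; symmetry; apply Wid. apply cminus. apply cplus. apply C3. apply F. apply cconst.
    - apply F. }
  assert (HDD : dde_ok s d k dl p N mu q b tau E X Y W Z 0).
  { intros u Hu. destruct (HD u Hu) as (D1 & D2 & D3 & D4).
    assert (e0 : Rmax 0 u = u) by (apply Rmax_right; lra).
    assert (e0' : Rmax (- tau) u = u) by (apply Rmax_right; lra).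
    assert (e1 : Rmax (- tau) (u - tau) = u - tau) by (apply Rmax_right; lra).
    unfold X, Y, W, Z. rewrite e0, e0', e1.
    split; [|split; [|split]]; apply is_derive_clamp; auto; lra. }
  assert (HPO : params_ok s d k dl p N mu q b tau E Ei) by (repeat split; auto).
  destruct (core_bounds s d k dl p N mu q b tau E Ei xs ys vs zs X Y W Z 0 HPO HE HPos HDD t Ht)
    as (B1 & B2 & B3 & B4 & _).
  set (C0 := Lyap k dl p N q tau E Ei xs ys vs zs X Y W Z 0) in *.
  assert (HG := G_cont xs ys vs zs X Y W Z Hxs Hvs HPos).
  assert (Hhist : forall u, - tau <= u <= 0 -> X u = phi1 u /\ W u = phi3 u).
  { intros u Hu. unfold X, W. rewrite Rmax_right by lra. apply Hin; auto. }
  set (eta' := eta * (xs + vs + 1)).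
  assert (Heta' : 0 < eta') by (unfold eta'; apply Rmult_lt_0_compat; lra).
  assert (HGb : forall u, - tau <= u <= 0 -> Rabs (Gf xs vs X W u) <= eta').
  { intros u Hu. destruct (Hhist u Hu) as [e1 e2]. unfold Gf. rewrite e1, e2.
    destruct (Hphi u Hu) as [p1 p3]. destruct (Hnear u Hu) as [n1 n3].
    assert (Hn : 0 <= Hf (xs * vs) (phi1 u * phi3 u)).
    { apply Hf_nonneg. apply Rmult_le_pos; lra. intros; apply Rmult_le_pos; lra.
      intros Hw. assert (vs > 0). { destruct (Req_dec vs 0) as [->|]; [rewrite Rmult_0_r in Hw; lra|lra]. }
      assert (xs / 2 < phi1 u). { apply Rabs_lt_between in n1. assert (capa xs = xs) by (unfold capa; destruct (Rlt_dec 0 xs); lra). lra. }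
      assert (vs / 2 < phi3 u). { apply Rabs_lt_between in n3. assert (capa vs = vs) by (unfold capa; destruct (Rlt_dec 0 vs); lra). lra. }
      apply Rmult_lt_0_compat; lra. }
    rewrite Rabs_right by lra. apply Hf_small; auto.
    - apply Rmult_le_pos; lra.
    - apply capa_use. apply Rmult_le_pos; lra. fold ws.
      assert (2 * eta * (xs + vs + 1) <= capa ws).
      { assert (H2 := Het7). apply Rmult_le_compat_r with (r := 2 * (xs + vs + 1)) in H2; [|lra].
        replace (capa ws / (2 * (xs + vs + 1)) * (2 * (xs + vs + 1))) with (capa ws) in H2 by (field; lra). lra. }
      unfold eta'. lra.
    - apply Rmult_le_pos; lra.
    - replace (phi1 u * phi3 u - xs * vs) with ((phi1 u - xs) * phi3 u + xs * (phi3 u - vs)) by ring.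
      eapply Rle_lt_trans. apply Rabs_triang. rewrite !Rabs_mult.
      assert (Rabs (phi3 u) <= vs + 1). { rewrite Rabs_right by lra. apply Rabs_lt_between in n3. lra. }
      assert (Rabs (phi1 u - xs) * Rabs (phi3 u) <= eta * (vs + 1)).
      { apply Rmult_le_compat; try apply Rabs_pos; lra. }
      assert (Rabs xs * Rabs (phi3 u - vs) < xs * eta).
      { rewrite Rabs_right by lra. apply Rmult_lt_compat_l; lra. }
      unfold eta'. lra. }
  assert (HI : k * (RInt (Gf xs vs X W) 0 0 - RInt (Gf xs vs X W) 0 (0 - tau)) <= k * tau * eta').
  { assert (Ex : ex_RInt (Gf xs vs X W) (- tau) 0).
    { apply (ex_RInt_continuous (V:=R_CompleteNormedModule)). intros; apply HG. }
    rewrite RInt_point. replace (0 - tau) with (- tau) by ring.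
    rewrite <- (opp_RInt_swap (V:=R_CompleteNormedModule) _ _ _ Ex).
    change (k * (0 - - RInt (Gf xs vs X W) (- tau) 0) <= k * tau * eta').
    assert (Hb' := abs_RInt_le_const (Gf xs vs X W) (- tau) 0 eta' ltac:(lra) Ex HGb).
    assert (RInt (Gf xs vs X W) (- tau) 0 <= tau * eta').
    { assert (H := RRle_abs (RInt (Gf xs vs X W) (- tau) 0)). replace (0 - - tau) with tau in Hb' by ring. lra. }
    replace (k * (0 - - RInt (Gf xs vs X W) (- tau) 0)) with (k * RInt (Gf xs vs X W) (- tau) 0) by ring.
    rewrite Rmult_assoc. apply Rmult_le_compat_l; lra. }
  assert (X0 : X 0 = phi1 0). { unfold X. rewrite Rmax_right by lra. apply Hin; lra. }
  assert (W0 : W 0 = phi3 0). { unfold W. rewrite Rmax_right by lra. apply Hin; lra. }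
  assert (Y0 : Y 0 = y0). { unfold Y. rewrite Rmax_right by lra. auto. }
  assert (Z0 : Z 0 = z0). { unfold Z. rewrite Rmax_right by lra. auto. }
  destruct (Hnear 0 ltac:(lra)) as [n10 n30]. destruct (Hphi 0 ltac:(lra)) as [p10 p30].
  assert (H1 : Hf xs (X 0) <= eta).
  { rewrite X0. apply Hf_small; auto; try lra. apply capa_use; lra. }
  assert (H2 : Hf ys (Y 0) <= eta).
  { rewrite Y0. apply Hf_small; auto; try lra. apply capa_use; lra. }
  assert (H3 : Hf vs (W 0) <= eta).
  { rewrite W0. apply Hf_small; auto; try lra. apply capa_use; lra. }
  assert (H4 : Hf zs (Z 0) <= eta).
  { rewrite Z0. apply Hf_small; auto; try lra. apply capa_use; lra. }
  assert (HC0 : C0 <= K * eta).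
  { unfold C0, Lyap. fold cv cz.
    assert (Ei * Hf ys (Y 0) <= Ei * eta) by (apply Rmult_le_compat_l; lra).
    assert (cv * Hf vs (W 0) <= cv * eta) by (apply Rmult_le_compat_l; lra).
    assert (cz * Hf zs (Z 0) <= cz * eta) by (apply Rmult_le_compat_l; lra).
    unfold K. unfold eta' in HI. lra. }
  assert (HC1 : C0 <= m * rho).
  { assert (K * eta <= m * rho).
    { apply Rmult_le_compat_l with (r := K) in Het2; [|lra].
      replace (K * (m * rho / K)) with (m * rho) in Het2 by (field; lra). auto. }
    lra. }
  destruct Hm1 as (m1 & m2 & m3 & m4).
  assert (D1 : forall c h, 0 < c -> m <= c -> c * h <= C0 -> h <= rho).
  { intros c h Hc0 Hmc Hh. apply Hf_div in Hh; auto.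
    assert (C0 / c <= m * rho / c) by (apply Rmult_le_compat_r; [left; apply Rinv_0_lt_compat|]; lra).
    assert (m * rho / c <= rho).
    { apply Rmult_le_reg_r with c; auto. replace (m * rho / c * c) with (m * rho) by (field; lra). nra. }
    lra. }
  assert (P := HPos). destruct P as [PX PY PY' PW PW' PZ PZ' CX CY CW CZ].
  assert (Xt : X t = x t) by (unfold X; rewrite Rmax_right; lra).
  assert (Yt : Y t = y t) by (unfold Y; rewrite Rmax_right; lra).
  assert (Wt : W t = v t) by (unfold W; rewrite Rmax_right; lra).
  assert (Zt : Z t = z t) by (unfold Z; rewrite Rmax_right; lra).
  rewrite <- Xt, <- Yt, <- Wt, <- Zt.
  assert (Hmr : m * rho <= rho) by nra.
  repeat split.
  - assert (Hn : 0 <= Hf xs (X t)) by (apply Hf_nonneg; intros; try lra; try apply Rlt_le; apply PX).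
    assert (Hl : Rabs (X t - xs) <= Hf xs (X t) + 2 * sqrt xs * sqrt (Hf xs (X t)))
      by (apply Hf_close; intros; try lra; try apply Rlt_le; apply PX).
    apply (close_from xs (X t) (Hf xs (X t)) rho eps); auto; try lra.
    apply Hrho2; unfold A; lra.
  - assert (Hn : 0 <= Hf ys (Y t)) by (apply Hf_nonneg; intros; auto).
    assert (Hl : Rabs (Y t - ys) <= Hf ys (Y t) + 2 * sqrt ys * sqrt (Hf ys (Y t)))
      by (apply Hf_close; intros; auto).
    apply (close_from ys (Y t) (Hf ys (Y t)) rho eps); auto.
    apply (D1 Ei); auto. apply Hrho2; unfold A; lra.
  - assert (Hn : 0 <= Hf vs (W t)) by (apply Hf_nonneg; intros; auto).
    assert (Hl : Rabs (W t - vs) <= Hf vs (W t) + 2 * sqrt vs * sqrt (Hf vs (W t)))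
      by (apply Hf_close; intros; auto).
    apply (close_from vs (W t) (Hf vs (W t)) rho eps); auto.
    apply (D1 cv); auto. apply Hrho2; unfold A; lra.
  - assert (Hn : 0 <= Hf zs (Z t)) by (apply Hf_nonneg; intros; auto).
    assert (Hl : Rabs (Z t - zs) <= Hf zs (Z t) + 2 * sqrt zs * sqrt (Hf zs (Z t)))
      by (apply Hf_close; intros; auto).
    apply (close_from zs (Z t) (Hf zs (Z t)) rho eps); auto.
    apply (D1 cz); auto. apply Hrho2; unfold A; lra.
Qed.


Lemma generic_GAS s d k dl p N mu q b tau xs ys vs zs P :
  allpos s d k dl p N mu q b tau ->
  eq_ok s d k dl p N mu q b (exp (- (dl * tau))) (exp (dl * tau)) xs ys vs zs ->
  (forall phi1 phi3 y0 z0 x y v z, admissible tau phi1 phi3 y0 z0 -> P phi1 phi3 y0 z0 ->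
     is_solution s d k dl p N mu q b tau phi1 phi3 y0 z0 x y v z ->
     exists T, 0 < T /\ forall t, T <= t -> (0 < ys -> 0 < y t) /\ (0 < vs -> 0 < v t) /\ (0 < zs -> 0 < z t)) ->
  GAS_wrt s d k dl p N mu q b tau P xs ys vs zs.
Proof.
  intros HP HE Hev. split.
  - intros eps Heps. destruct (gen_stab s d k dl p N mu q b tau xs ys vs zs HP HE eps Heps) as [eta [He H]].
    exists eta. split; auto. intros phi1 phi3 y0 z0 x y v z HA _ Hn Hy Hz HS. eapply H; eauto.
  - intros phi1 phi3 y0 z0 x y v z HA HPP HS. eapply gen_attract; eauto.
Qed.

Lemma div_le1 a c : 0 < c -> a / c <= 1 -> a <= c.
Proof. intros Hc H. apply Rmult_le_compat_r with (r := c) in H; [|lra].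
  replace (a / c * c) with a in H by (field; lra). lra. Qed.

Lemma div_gt1 a c : 0 < c -> 1 < a / c -> c < a.
Proof. intros Hc H. apply Rmult_lt_compat_r with (r := c) in H; [|lra].
  replace (a / c * c) with a in H by (field; lra). lra. Qed.

Lemma eq_i s d k dl p N mu q b E Ei :
  0 < s -> 0 < d -> 0 < k -> 0 < dl -> 0 < p -> 0 < N -> 0 < mu -> 0 < q -> 0 < b ->
  0 < E -> E * Ei = 1 ->
  s / (d * (mu / (k * E * N))) <= 1 -> eq_ok s d k dl p N mu q b E Ei (s / d) 0 0 0.
Proof.
  intros Hs Hd Hk Hdl Hp HN Hmu Hq Hb HE HEi HR.
  assert (Ei = / E) by (field_simplify_eq; lra). subst Ei.
  replace (s / (d * (mu / (k * E * N)))) with ((s * k * E * N) / (d * mu)) in HR by (field; repeat split; lra).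
  apply div_le1 in HR; [|apply Rmult_lt_0_compat; lra].
  repeat split; try lra.
  - apply Rdiv_lt_0_compat; lra.
  - field; lra.
  - replace (k * (s / d) * (N * dl)) with ((dl * / E / d) * (s * k * E * N)) by (field; lra).
    replace (/ E * (dl + p * 0) * mu) with ((dl * / E / d) * (d * mu)) by (field; lra).
    apply Rmult_le_compat_l; auto. apply Rmult_le_pos. apply Rmult_le_pos. lra.
    left; apply Rinv_0_lt_compat; lra. left; apply Rinv_0_lt_compat; lra.
Qed.

Lemma eq_ii s d k dl p N mu q b E Ei :
  0 < s -> 0 < d -> 0 < k -> 0 < dl -> 0 < p -> 0 < N -> 0 < mu -> 0 < q -> 0 < b ->
  0 < E -> E * Ei = 1 ->
  s / (d * (mu / (k * E * N)) + Ei * dl * (b / q)) <= 1 -> 1 < s / (d * (mu / (k * E * N))) ->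
  eq_ok s d k dl p N mu q b E Ei (mu * Ei / (k * N))
       (E / dl * (s - d * mu * Ei / (k * N)))
       (N * E / mu * (s - d * mu * Ei / (k * N))) 0.
Proof.
  intros Hs Hd Hk Hdl Hp HN Hmu Hq Hb HE HEi HR1 HR0.
  assert (Ei = / E) by (field_simplify_eq; lra). subst Ei.
  assert (HE' : 0 < / E) by (apply Rinv_0_lt_compat; lra).
  apply div_gt1 in HR0.
  2:{ apply Rmult_lt_0_compat. lra. apply Rdiv_lt_0_compat. lra. repeat apply Rmult_lt_0_compat; lra. }
  apply div_le1 in HR1.
  2:{ apply Rplus_lt_le_0_compat. apply Rmult_lt_0_compat. lra. apply Rdiv_lt_0_compat. lra. repeat apply Rmult_lt_0_compat; lra.
      left. apply Rmult_lt_0_compat. apply Rmult_lt_0_compat; lra. apply Rdiv_lt_0_compat; lra. }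
  set (S := s - d * mu * / E / (k * N)).
  assert (HS : 0 < S).
  { unfold S. replace (d * mu * / E / (k * N)) with (d * (mu / (k * E * N))) by (field; repeat split; lra). lra. }
  assert (HS2 : S <= / E * dl * (b / q)).
  { unfold S. replace (d * mu * / E / (k * N)) with (d * (mu / (k * E * N))) by (field; repeat split; lra). lra. }
  repeat split; try lra.
  - apply Rdiv_lt_0_compat. apply Rmult_lt_0_compat; lra. apply Rmult_lt_0_compat; lra.
  - left. apply Rmult_lt_0_compat; auto. apply Rdiv_lt_0_compat; lra.
  - left. apply Rmult_lt_0_compat; auto. apply Rdiv_lt_0_compat. apply Rmult_lt_0_compat; lra. lra.
  - unfold S. field. repeat split; lra.
  - field. repeat split; lra.
  - field. repeat split; lra.
  - right. field. repeat split; lra.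
  - replace (q * (E / dl * S)) with ((q * E / dl) * S) by (field; lra).
    apply Rle_trans with ((q * E / dl) * (/ E * dl * (b / q))).
    apply Rmult_le_compat_l; auto. left. apply Rdiv_lt_0_compat. apply Rmult_lt_0_compat; lra. lra.
    right. field. repeat split; lra.
Qed.

Lemma eq_iii s d k dl p N mu q b E Ei :
  0 < s -> 0 < d -> 0 < k -> 0 < dl -> 0 < p -> 0 < N -> 0 < mu -> 0 < q -> 0 < b ->
  0 < E -> E * Ei = 1 ->
  1 < s / (d * (mu / (k * E * N)) + Ei * dl * (b / q)) ->
  eq_ok s d k dl p N mu q b E Ei (x2bar s d k dl N mu q b) (b / q) (N * dl * b / (mu * q))
       (dl / p * (k * E * N * x2bar s d k dl N mu q b / mu - 1)).
Proof.
  intros Hs Hd Hk Hdl Hp HN Hmu Hq Hb HE HEi HR1.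
  assert (Ei = / E) by (field_simplify_eq; lra). subst Ei.
  assert (HE' : 0 < / E) by (apply Rinv_0_lt_compat; lra).
  apply div_gt1 in HR1.
  2:{ apply Rplus_lt_le_0_compat. apply Rmult_lt_0_compat. lra. apply Rdiv_lt_0_compat. lra. repeat apply Rmult_lt_0_compat; lra.
      left. apply Rmult_lt_0_compat. apply Rmult_lt_0_compat; lra. apply Rdiv_lt_0_compat; lra. }
  unfold x2bar.
  set (D := d + k * N * dl * b / (mu * q)).
  assert (HD : 0 < D).
  { unfold D. assert (0 < k * N * dl * b / (mu * q)). apply Rdiv_lt_0_compat.
    repeat apply Rmult_lt_0_compat; lra. apply Rmult_lt_0_compat; lra. lra. }
  assert (Hz : 0 < k * E * N * (s / D) / mu - 1).
  { assert (mu * D < k * E * N * s).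
    { assert (k * E * N * (d * (mu / (k * E * N)) + / E * dl * (b / q)) = mu * D).
      { unfold D. field. repeat split; lra. }
      rewrite <- H. apply Rmult_lt_compat_l; auto. repeat apply Rmult_lt_0_compat; lra. }
    assert (1 < k * E * N * (s / D) / mu).
    { replace (k * E * N * (s / D) / mu) with ((k * E * N * s) / (mu * D)) by (field; repeat split; lra).
      apply Rmult_lt_reg_r with (mu * D). apply Rmult_lt_0_compat; lra.
      replace (k * E * N * s / (mu * D) * (mu * D)) with (k * E * N * s) by (field; repeat split; lra). lra. }
    lra. }
  repeat split; try lra.
  - apply Rdiv_lt_0_compat; lra.
  - left; apply Rdiv_lt_0_compat; lra.
  - left; apply Rdiv_lt_0_compat. repeat apply Rmult_lt_0_compat; lra. apply Rmult_lt_0_compat; lra.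
  - left. apply Rmult_lt_0_compat; auto. apply Rdiv_lt_0_compat; lra.
  - replace (d * (s / D) + k * (s / D) * (N * dl * b / (mu * q))) with ((s / D) * (d + k * N * dl * b / (mu * q)))
      by (field; repeat split; lra). change (d + k * N * dl * b / (mu * q)) with D. field. lra.
  - field. repeat split; lra.
  - field. repeat split; lra.
  - right. field. repeat split; lra.
  - right. field. lra.
  - replace (q * (b / q) - b) with 0 by (field; lra). ring.
Qed.

Theorem theorem4p1 (s d k dl p N mu q b tau : R) :
  0 < s -> 0 < d -> 0 < k -> 0 < dl -> 0 < p -> 0 < N -> 0 < mu -> 0 < q -> 0 < b ->
  0 < tau ->
  (R0bar s d k dl N mu tau <= 1 ->
     GAS_wrt s d k dl p N mu q b tau (fun _ _ _ _ => True) (s / d) 0 0 0) /\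
  (R1bar s d k dl N mu q b tau <= 1 < R0bar s d k dl N mu tau ->
     GAS_wrt s d k dl p N mu q b tau (cond_ii tau)
       (mu * exp (dl * tau) / (k * N))
       (exp (- (dl * tau)) / dl * (s - d * mu * exp (dl * tau) / (k * N)))
       (N * exp (- (dl * tau)) / mu * (s - d * mu * exp (dl * tau) / (k * N)))
       0) /\
  (1 < R1bar s d k dl N mu q b tau ->
     GAS_wrt s d k dl p N mu q b tau (cond_iii tau)
       (x2bar s d k dl N mu q b)
       (b / q)
       (N * dl * b / (mu * q))
       (dl / p * (k * exp (- (dl * tau)) * N * x2bar s d k dl N mu q b / mu - 1))).
Proof.
  intros Hs Hd Hk Hdl Hp HN Hmu Hq Hb Htau.
  assert (HP : allpos s d k dl p N mu q b tau) by (repeat split; auto).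
  assert (HEEi := E_Ei dl tau).
  set (E := exp (- (dl * tau))) in *. set (Ei := exp (dl * tau)) in *.
  assert (HE0 : 0 < E) by apply exp_pos. assert (HEi0 : 0 < Ei) by apply exp_pos.
  unfold R0bar, R1bar. fold E Ei.
  split; [|split].
  - intros HR0. apply generic_GAS; auto.
    + apply eq_i; auto.
    + intros. exists 1. split. lra. intros; repeat split; intros; lra.
  - intros [HR1 HR0]. apply generic_GAS; auto.
    + apply eq_ii; auto.
    + intros phi1 phi3 y0 z0 x y v z HA Hc HS.
      destruct (sol_eventual s d k dl p N mu q b tau phi1 phi3 y0 z0 x y v z HP HA HS Hc) as [T [HT HT']].
      exists T. split; auto. intros t Ht. destruct (HT' t Ht). repeat split; intros; auto. lra.
  - intros HR1. apply generic_GAS; auto.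
    + apply eq_iii; auto.
    + intros phi1 phi3 y0 z0 x y v z HA [Hz0 Hc] HS.
      destruct (sol_eventual s d k dl p N mu q b tau phi1 phi3 y0 z0 x y v z HP HA HS Hc) as [T [HT HT']].
      destruct (sol_strict s d k dl p N mu q b tau phi1 phi3 y0 z0 x y v z HP HA HS) as (_ & _ & _ & Zs).
      exists T. split; auto. intros t Ht. destruct (HT' t Ht). repeat split; intros; auto. apply Zs; auto; lra.
Qed.
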